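(* Let $\{a_n\}_{n\ge1}$ be complex numbers with $\sum_{n=1}^\infty|a_n|^2(\log n)^3<\infty$, and for $t\in[0,1]$ let $f_t(z)=\sum_{n=1}^\infty r_n(t)a_nz^n$ ($z\in\mathbb D$). Then for almost every $t\in[0,1]$, $$\int_0^1(1-r)\left(\log\frac{1}{1-r}\right)^2\left[M_\infty(r,f_t')\right]^2\,dr<\infty.$$
   Context: $\mathbb D$ is the open unit disc and $M_\infty(r,f)=\max_{|z|=r}|f(z)|$. The Rademacher functions are $r_0(t)=1$ on $(0,1/2)$, $-1$ on $(1/2,1)$, $0$ at $t=0,1/2,1$, and $r_n(t)=r_0(2^nt)$ (extended 1-periodically) for $n\ge1$. *)

(* Defs.v *)
From Stdlib Require Import Reals Lra.
Open Scope R_scope.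

Definition Cx := (R * R)%type.
Definition Cadd (z w : Cx) : Cx := (fst z + fst w, snd z + snd w).
Definition Cmul (z w : Cx) : Cx :=
  (fst z * fst w - snd z * snd w, fst z * snd w + snd z * fst w).
Definition Cscale (c : R) (z : Cx) : Cx := (c * fst z, c * snd z).
Definition C1 : Cx := (1, 0).
Fixpoint Cpow (z : Cx) (n : nat) : Cx :=
  match n with O => C1 | S m => Cmul z (Cpow z m) end.
Definition Cnorm (z : Cx) : R := sqrt (fst z ^ 2 + snd z ^ 2).

Definition Csum_to (u : nat -> Cx) (w : Cx) : Prop :=
  Un_cv (fun N => sum_f_R0 (fun k => fst (u k)) N) (fst w) /\
  Un_cv (fun N => sum_f_R0 (fun k => snd (u k)) N) (snd w).

Definition rad0 (t : R) : R :=
  let u := frac_part t in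
  if Req_EM_T u 0 then 0
  else if Rlt_dec u (1/2) then 1
  else if Req_EM_T u (1/2) then 0
  else -1.
Definition rad (n : nat) (t : R) : R := rad0 (2 ^ n * t).

(* f_t(z) = sum_{n>=1} r_n(t) a_n z^n, so
   f_t'(z) = sum_{n>=1} n r_n(t) a_n z^(n-1); the k-th term (k>=0) is for n = k+1. *)
Definition fderiv_term (a : nat -> Cx) (t : R) (z : Cx) (k : nat) : Cx :=
  Cmul (Cscale (INR (S k) * rad (S k) t) (a (S k))) (Cpow z k).

(* the set { |f_t'(z)| : |z| = r } ; M_infty(r, f_t') is its supremum *)
Definition modset (a : nat -> Cx) (t r : R) : R -> Prop :=
  fun m => exists z w, Cnorm z = r /\ Csum_to (fderiv_term a t z) w /\ m = Cnorm w.

(* int_0^1 (1-r) (log 1/(1-r))^2 [M_infty(r,f_t')]^2 dr < infinity,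
   as an improper Riemann integral of a nonnegative continuous integrand on [0,1) *)
Definition finite_weighted_integral (a : nat -> Cx) (t : R) : Prop :=
  exists M : R -> R,
    (forall r, 0 <= r < 1 -> is_lub (modset a t r) (M r)) /\
    exists B : R, forall s, 0 <= s < 1 ->
      exists pr : Riemann_integrable
                    (fun r => (1 - r) * (ln (1 / (1 - r))) ^ 2 * (M r) ^ 2) 0 s,
        RiemannInt pr <= B.

Definition null_set (E : R -> Prop) : Prop :=
  forall eps, 0 < eps ->
    exists lo hi : nat -> R,
      (forall k, lo k <= hi k) /\
      (forall x, E x -> exists k, lo k < x < hi k) /\
      (forall N, sum_f_R0 (fun k => hi k - lo k) N <= eps).

(* Main.v *)
From Stdlib Require Import Reals Lra Lia ZArith ClassicalEpsilon.
From Coquelicot Require Import Coquelicot.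
Require Import Defs.
Open Scope R_scope.

Fixpoint rsum (f : nat -> R) (n : nat) : R :=
  match n with O => 0 | S m => rsum f m + f m end.
Fixpoint rprod (f : nat -> R) (n : nat) : R :=
  match n with O => 1 | S m => rprod f m * f m end.

Lemma rsum_ext f g n : (forall i, (i < n)%nat -> f i = g i) -> rsum f n = rsum g n.
Proof. induction n; simpl; intros H; auto. rewrite IHn by (intros; apply H; lia). rewrite H by lia; auto. Qed.
Lemma rsum_le f g n : (forall i, (i < n)%nat -> f i <= g i) -> rsum f n <= rsum g n.
Proof. induction n; simpl; intros H; [lra|]. assert (f n <= g n) by (apply H; lia).
 assert (rsum f n <= rsum g n) by (apply IHn; intros; apply H; lia). lra. Qed.
Lemma rsum_nonneg f n : (forall i, (i < n)%nat -> 0 <= f i) -> 0 <= rsum f n.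
Proof. intros H. replace 0 with (rsum (fun _ => 0) n). apply rsum_le; auto.
 induction n; simpl; auto. rewrite IHn; [lra|intros; apply H; lia]. Qed.
Lemma rsum_plus f g n : rsum (fun i => f i + g i) n = rsum f n + rsum g n.
Proof. induction n; simpl; lra. Qed.
Lemma rsum_scal c f n : rsum (fun i => c * f i) n = c * rsum f n.
Proof. induction n; simpl; [lra|rewrite IHn; ring]. Qed.
Lemma rsum_const c n : rsum (fun _ => c) n = INR n * c.
Proof. induction n; simpl rsum; [simpl; ring|rewrite IHn, S_INR; ring]. Qed.
Lemma rsum_split f n m : rsum f (n + m) = rsum f n + rsum (fun i => f (n + i)%nat) m.
Proof. induction m; simpl. rewrite Nat.add_0_r; ring. rewrite Nat.add_succ_r; simpl; rewrite IHm; ring. Qed.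
Lemma rsum_mono f n m : (forall i, 0 <= f i) -> (n <= m)%nat -> rsum f n <= rsum f m.
Proof. intros H Hnm. replace m with (n + (m - n))%nat by lia. rewrite rsum_split.
 assert (0 <= rsum (fun i => f (n + i)%nat) (m - n)) by (apply rsum_nonneg; auto). lra. Qed.
Lemma rsum_abs f n : Rabs (rsum f n) <= rsum (fun i => Rabs (f i)) n.
Proof. induction n; simpl. rewrite Rabs_R0; lra.
 eapply Rle_trans; [apply Rabs_triang|]. lra. Qed.
Lemma sum_f_R0_rsum f N : sum_f_R0 f N = rsum f (S N).
Proof. induction N; simpl; [ring|rewrite IHN; simpl; ring]. Qed.
Lemma rsum_swap (f : nat -> nat -> R) n m :
  rsum (fun i => rsum (fun j => f i j) m) n = rsum (fun j => rsum (fun i => f i j) n) m.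
Proof. induction n; simpl. induction m; simpl; lra.
 rewrite IHn, <- rsum_plus. reflexivity. Qed.
Lemma rsum_last_le f n i : (forall j, 0 <= f j) -> (i < n)%nat -> f i <= rsum f n.
Proof. intros H Hi. induction n. lia. simpl. destruct (Nat.eq_dec i n).
 subst. assert (0 <= rsum f n) by (apply rsum_nonneg; auto). lra.
 assert (f i <= rsum f n) by (apply IHn; lia). specialize (H n); lra. Qed.

Lemma rprod_exp g n : rprod (fun i => exp (g i)) n = exp (rsum g n).
Proof. induction n; simpl. now rewrite exp_0. rewrite IHn, exp_plus; auto. Qed.
Lemma rprod_ext f g n : (forall i, (i < n)%nat -> f i = g i) -> rprod f n = rprod g n.
Proof. induction n; simpl; intros H; auto. rewrite IHn by (intros; apply H; lia). rewrite H by lia; auto. Qed.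
Lemma rprod_le f g n : (forall i, (i < n)%nat -> 0 <= f i <= g i) -> rprod f n <= rprod g n.
Proof. induction n; simpl; intros H; [lra|].
 assert (0 <= f n <= g n) by (apply H; lia).
 assert (0 <= rprod f n). { clear IHn. induction n; simpl; [lra|]. apply Rmult_le_pos.
  apply IHn. intros; apply H; lia. intros; apply H; lia. apply H; lia. }
 assert (rprod f n <= rprod g n) by (apply IHn; intros; apply H; lia).
 apply Rmult_le_compat; lra. Qed.
Lemma rprod_mult f g n : rprod (fun i => f i * g i) n = rprod f n * rprod g n.
Proof. induction n; simpl; [ring|rewrite IHn; ring]. Qed.
Lemma rprod_const c n : rprod (fun _ => c) n = c ^ n.
Proof. induction n; simpl; [ring|rewrite IHn; ring]. Qed.
Lemma rprod_split f n m : rprod f (n + m) = rprod f n * rprod (fun i => f (n + i)%nat) m.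
Proof. induction m; simpl. rewrite Nat.add_0_r; ring. rewrite Nat.add_succ_r; simpl; rewrite IHm; ring. Qed.

Definition Csub (z w : Cx) : Cx := (fst z - fst w, snd z - snd w).
Definition C0 : Cx := (0, 0).
Fixpoint csum (u : nat -> Cx) (n : nat) : Cx :=
  match n with O => C0 | S m => Cadd (csum u m) (u m) end.

Lemma Cnorm_mul z w : Cnorm (Cmul z w) = Cnorm z * Cnorm w.
Proof. exact (Cmod_mult z w). Qed.
Lemma Cnorm_add z w : Cnorm (Cadd z w) <= Cnorm z + Cnorm w.
Proof. exact (Cmod_triangle z w). Qed.
Lemma Cnorm_ge0 z : 0 <= Cnorm z.
Proof. exact (Cmod_ge_0 z). Qed.
Lemma Cnorm_C0 : Cnorm C0 = 0.
Proof. exact Cmod_0. Qed.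
Lemma Cnorm_C1 : Cnorm C1 = 1.
Proof. exact Cmod_1. Qed.
Lemma Cnorm_scale c z : Cnorm (Cscale c z) = Rabs c * Cnorm z.
Proof. unfold Cnorm, Cscale; simpl. rewrite <- sqrt_Rsqr_abs. rewrite <- sqrt_mult_alt.
 f_equal. unfold Rsqr; ring. apply Rle_0_sqr. Qed.
Lemma Cnorm_pow z k : Cnorm (Cpow z k) = Cnorm z ^ k.
Proof. induction k; simpl. apply Cnorm_C1. rewrite Cnorm_mul, IHk; auto. Qed.
Lemma Cnorm_fst z : Rabs (fst z) <= Cnorm z.
Proof. exact (re_le_Cmod z). Qed.
Lemma Cnorm_snd z : Rabs (snd z) <= Cnorm z.
Proof. unfold Cnorm. rewrite <- sqrt_Rsqr_abs. apply sqrt_le_1_alt. unfold Rsqr; nra. Qed.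
Lemma Cnorm_sq z : Cnorm z ^ 2 = fst z ^ 2 + snd z ^ 2.
Proof. unfold Cnorm. rewrite pow2_sqrt; auto. nra. Qed.
Lemma Cnorm_sub_tri z w : Cnorm z <= Cnorm w + Cnorm (Csub z w).
Proof. replace z with (Cadd w (Csub z w)) at 1. apply Cnorm_add.
 destruct z, w; unfold Cadd, Csub; simpl; f_equal; ring. Qed.
Lemma Cnorm_sub_sym z w : Cnorm (Csub z w) = Cnorm (Csub w z).
Proof. unfold Cnorm, Csub; simpl; f_equal; ring. Qed.
Lemma Cnorm_sub_tri3 z w v : Cnorm (Csub z v) <= Cnorm (Csub z w) + Cnorm (Csub w v).
Proof. replace (Csub z v) with (Cadd (Csub z w) (Csub w v)). apply Cnorm_add.
 destruct z, w, v; unfold Cadd, Csub; simpl; f_equal; ring. Qed.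

Lemma Cmul_assoc x y z : Cmul x (Cmul y z) = Cmul (Cmul x y) z.
Proof. destruct x, y, z; unfold Cmul; simpl; f_equal; ring. Qed.
Lemma Cmul_comm x y : Cmul x y = Cmul y x.
Proof. destruct x, y; unfold Cmul; simpl; f_equal; ring. Qed.
Lemma Cpow_add z m n : Cpow z (m + n) = Cmul (Cpow z m) (Cpow z n).
Proof. induction m; simpl. destruct (Cpow z n); unfold Cmul, C1; simpl; f_equal; ring.
 rewrite IHm, Cmul_assoc; auto. Qed.
Lemma Cmul_csum x u n : Cmul x (csum u n) = csum (fun i => Cmul x (u i)) n.
Proof. induction n; simpl. destruct x; unfold Cmul, C0; simpl; f_equal; ring.
 rewrite <- IHn. destruct x, (csum u n), (u n); unfold Cmul, Cadd; simpl; f_equal; ring. Qed.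
Lemma csum_ext u v n : (forall i, (i < n)%nat -> u i = v i) -> csum u n = csum v n.
Proof. induction n; simpl; intros H; auto. rewrite IHn by (intros; apply H; lia). rewrite H by lia; auto. Qed.
Lemma csum_fst u n : fst (csum u n) = rsum (fun i => fst (u i)) n.
Proof. induction n; simpl; auto. rewrite IHn; auto. Qed.
Lemma csum_snd u n : snd (csum u n) = rsum (fun i => snd (u i)) n.
Proof. induction n; simpl; auto. rewrite IHn; auto. Qed.
Lemma csum_split u n m : csum u (n + m) = Cadd (csum u n) (csum (fun i => u (n + i)%nat) m).
Proof. induction m; simpl. rewrite Nat.add_0_r. destruct (csum u n); unfold Cadd, C0; simpl; f_equal; ring.
 rewrite Nat.add_succ_r; simpl; rewrite IHm. destruct (csum u n), (csum (fun i => u (n + i)%nat) m), (u (n+m)%nat);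
 unfold Cadd; simpl; f_equal; ring. Qed.
Lemma Cnorm_csum u n : Cnorm (csum u n) <= rsum (fun i => Cnorm (u i)) n.
Proof. induction n; simpl. rewrite Cnorm_C0; lra.
 eapply Rle_trans; [apply Cnorm_add|]. lra. Qed.
Lemma Csub_csum u v n : Csub (csum u n) (csum v n) = csum (fun i => Csub (u i) (v i)) n.
Proof. induction n; simpl. unfold Csub, C0; simpl; f_equal; ring.
 rewrite <- IHn. destruct (csum u n), (csum v n), (u n), (v n); unfold Csub, Cadd; simpl; f_equal; ring. Qed.

Lemma Cpow_lip z w s p : Cnorm z <= s -> Cnorm w <= s ->
  Cnorm (Csub (Cpow z (S p)) (Cpow w (S p))) <= INR (S p) * s ^ p * Cnorm (Csub z w).
Proof. intros Hz Hw. assert (Hs : 0 <= s) by (pose proof (Cnorm_ge0 z); lra).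
 induction p.
 - simpl. replace (Csub (Cmul z C1) (Cmul w C1)) with (Csub z w). lra.
   destruct z, w; unfold Csub, Cmul, C1; simpl; f_equal; ring.
 - replace (Csub (Cpow z (S (S p))) (Cpow w (S (S p)))) with
     (Cadd (Cmul z (Csub (Cpow z (S p)) (Cpow w (S p)))) (Cmul (Cpow w (S p)) (Csub z w))).
   2:{ simpl. destruct (Cpow z p), (Cpow w p), z, w; unfold Csub, Cmul, Cadd; simpl; f_equal; ring. }
   eapply Rle_trans; [apply Cnorm_add|]. rewrite !Cnorm_mul, Cnorm_pow.
   assert (Cnorm w ^ S p <= s ^ S p) by (apply pow_incr; split; [apply Cnorm_ge0|auto]).
   pose proof (Cnorm_ge0 (Csub z w)). pose proof (Cnorm_ge0 (Csub (Cpow z (S p)) (Cpow w (S p)))).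
   assert (Cnorm z * Cnorm (Csub (Cpow z (S p)) (Cpow w (S p))) <= s * (INR (S p) * s ^ p * Cnorm (Csub z w))).
   { apply Rmult_le_compat; auto. apply Cnorm_ge0. }
   rewrite (S_INR (S p)). simpl pow in *. nra. Qed.

Lemma sinh_le y : 0 <= y -> exp y - exp (-y) <= y * (exp y + exp (-y)).
Proof. intros Hy. destruct (Req_dec y 0). subst. rewrite Ropp_0, exp_0; lra.
 set (g := fun y => y * (exp y + exp (-y)) - (exp y - exp (-y))).
 destruct (MVT_cor2 g (fun y => y * (exp y - exp (-y))) 0 y) as [c [Hc1 Hc2]]. lra.
 { intros c _. apply is_derive_Reals. unfold g. auto_derive; auto. ring. }
 unfold g in Hc1. rewrite Ropp_0, exp_0 in Hc1.
 assert (exp (-c) <= exp c) by (apply exp_le_3 || (destruct (Rle_lt_or_eq_dec (-c) c); [lra| |]);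
   [apply Rlt_le, exp_increasing; auto | rewrite e; lra]).
 assert (0 <= c * (exp c - exp (-c)) * (y - 0)) by (apply Rmult_le_pos; [apply Rmult_le_pos|]; lra).
 lra. Qed.

Lemma cosh_le y : exp y + exp (-y) <= 2 * exp (y ^ 2 / 2).
Proof.
 assert (Hpos : forall y, 0 <= y -> exp y + exp (-y) <= 2 * exp (y ^ 2 / 2)).
 { clear y. intros y Hy. destruct (Req_dec y 0). subst. rewrite Ropp_0, exp_0. simpl. replace (0*(0*1)/2) with 0 by field. rewrite exp_0; lra.
   set (k := fun y => (exp y + exp (-y)) * exp (- (y ^ 2 / 2))).
   destruct (MVT_cor2 k (fun y => ((exp y - exp (-y)) - y * (exp y + exp (-y))) * exp (- (y^2/2))) 0 y) as [c [Hc1 Hc2]]. lra.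
   { intros c _. apply is_derive_Reals. unfold k. auto_derive; auto. replace (c ^ 2 / 2) with (c * (c * 1) * / 2) by (simpl; field). field. }
   unfold k in Hc1.
   replace ((exp 0 + exp (- 0)) * exp (- (0 ^ 2 / 2))) with 2 in Hc1
     by (replace (- (0 ^ 2 / 2)) with 0 by (simpl; field); rewrite Ropp_0, exp_0; ring).
   pose proof (sinh_le c ltac:(lra)). pose proof (exp_pos (- (c ^ 2 / 2))).
   assert (((exp c - exp (- c)) - c * (exp c + exp (- c))) * exp (- (c ^ 2 / 2)) * (y - 0) <= 0).
   { apply Rmult_le_0_r; [|lra]. apply Rmult_le_0_r; lra. }
   assert ((exp y + exp (- y)) * exp (- (y ^ 2 / 2)) <= 2) by lra.
   replace (exp y + exp (-y)) with ((exp y + exp (- y)) * exp (- (y ^ 2 / 2)) * exp (y^2/2)).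
   2:{ rewrite Rmult_assoc, <- exp_plus. replace (- (y ^ 2 / 2) + y ^ 2 / 2) with 0 by ring. rewrite exp_0; ring. }
   apply Rmult_le_compat_r. left; apply exp_pos. lra. }
 destruct (Rle_dec 0 y). auto. replace (y ^ 2) with ((-y)^2) by ring.
 pose proof (Hpos (-y) ltac:(lra)). rewrite Ropp_involutive in H. lra. Qed.

Lemma exp1_gt2 : 2 < exp 1.
Proof. pose proof (exp_ineq1 1 ltac:(lra)). lra. Qed.

Lemma exp_nat_ge (n : nat) : 2 ^ n <= exp (INR n).
Proof. induction n. simpl; rewrite exp_0; lra. rewrite S_INR, exp_plus. simpl.
 pose proof exp1_gt2. pose proof (pow_le 2 n ltac:(lra)). nra. Qed.

Lemma pow_mult_exp (x : R) (n : nat) : exp (INR n * x) = exp x ^ n.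
Proof. induction n. simpl; rewrite Rmult_0_l, exp_0; auto. rewrite S_INR, Rmult_plus_distr_r, Rmult_1_l, exp_plus, IHn.
 simpl; ring. Qed.

Lemma bernoulli x m : 0 <= x -> 1 + INR m * x <= (1 + x) ^ m.
Proof. intros Hx. induction m. simpl; lra. rewrite S_INR. simpl.
 assert (0 <= INR m * x) by (apply Rmult_le_pos; auto; apply pos_INR). nra. Qed.

Lemma pow_decay x m : 0 <= x <= 1 -> (1 - x) ^ m * (1 + INR m * x) <= 1.
Proof. intros Hx. pose proof (bernoulli x m (proj1 Hx)).
 assert ((1 - x) ^ m * (1 + x) ^ m <= 1).
 { rewrite <- Rpow_mult_distr.
   apply Rle_trans with (1 ^ m); [apply pow_incr; nra | rewrite pow1; lra]. }
 assert (0 <= (1 - x) ^ m) by (apply pow_le; lra). nra. Qed.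

Lemma rsum_pow2 n : rsum (fun i => 2 ^ i) n = 2 ^ n - 1.
Proof. induction n; simpl rsum. simpl; lra. rewrite IHn; simpl; ring. Qed.
Lemma rsum_geom_half n : rsum (fun i => (/2) ^ i) n = 2 - 2 * (/2) ^ n.
Proof. induction n; simpl rsum. simpl; lra. rewrite IHn; simpl; field. Qed.
Lemma rsum_sq_half n : rsum (fun i => (INR i + 1) ^ 2 * (/2) ^ i) n =
   12 - (INR n ^ 2 + 4 * INR n + 6) * 2 * (/2) ^ n.
Proof. induction n; cbn [rsum]. simpl; lra. rewrite IHn, S_INR; simpl; field. Qed.
Lemma rsum_sq_half_le n : rsum (fun i => (INR i + 1) ^ 2 * (/2) ^ i) n <= 12.
Proof. rewrite rsum_sq_half. pose proof (pos_INR n). assert (0 < (/2)^n) by (apply pow_lt; lra). nra. Qed.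

Definition sg (i k : nat) : R := if Nat.ltb (k mod 2 ^ (S i)) (2 ^ i) then 1 else -1.

Lemma rsum_mult_r f c n : rsum (fun i => f i * c) n = rsum f n * c.
Proof. induction n; simpl; [ring|rewrite IHn; ring]. Qed.

Lemma sg_shift i m k : (i < m)%nat -> sg i (2 ^ m + k) = sg i k.
Proof. intros H. unfold sg. replace (2 ^ m + k)%nat with (k + 2 ^ (m - S i) * 2 ^ S i)%nat.
 rewrite Nat.Div0.mod_add. auto. rewrite <- Nat.pow_add_r. replace (m - S i + S i)%nat with m by lia. lia. Qed.
Lemma sg_top_lo m k : (k < 2 ^ m)%nat -> sg m k = 1.
Proof. intros H. unfold sg. rewrite Nat.mod_small. apply Nat.ltb_lt in H. rewrite H; auto.
 simpl; lia. Qed.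
Lemma sg_top_hi m k : (k < 2 ^ m)%nat -> sg m (2 ^ m + k) = -1.
Proof. intros H. unfold sg. rewrite Nat.mod_small by (simpl; lia).
 destruct (Nat.ltb_spec (2 ^ m + k) (2 ^ m)); [lia|auto]. Qed.

Lemma count_prod (h : nat -> R -> R) m :
  rsum (fun k => rprod (fun i => h i (sg i k)) m) (2 ^ m) = rprod (fun i => h i 1 + h i (-1)) m.
Proof. induction m. simpl; ring.
 replace (2 ^ S m)%nat with (2 ^ m + 2 ^ m)%nat by (simpl; lia).
 rewrite rsum_split. cbn [rprod].
 rewrite (rsum_ext _ (fun k => rprod (fun i => h i (sg i k)) m * h m 1)).
 2:{ intros k Hk. rewrite sg_top_lo; auto. }
 rewrite (rsum_ext (fun i => rprod (fun i0 => h i0 (sg i0 (2 ^ m + i))) m * h m (sg m (2 ^ m + i))) (fun k => rprod (fun i => h i (sg i k)) m * h m (-1))).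
 2:{ intros k Hk. rewrite sg_top_hi by auto. f_equal. apply rprod_ext. intros; rewrite sg_shift; auto. }
 rewrite !rsum_mult_r, IHm. ring. Qed.

Lemma rprod_pos f n : (forall i, (i < n)%nat -> 0 <= f i) -> 0 <= rprod f n.
Proof. induction n; simpl; intros; [lra|]. apply Rmult_le_pos; [apply IHn|]; auto. Qed.

Lemma exp_mono y z : y <= z -> exp y <= exp z.
Proof. intros H; destruct (Rle_lt_or_eq_dec _ _ H). left; apply exp_increasing; auto. subst; lra. Qed.
Lemma exp_ge1 y : 0 <= y -> 1 <= exp y.
Proof. intros; rewrite <- exp_0; apply exp_mono; auto. Qed.

Definition rsg (x : nat -> R) (m k : nat) : R := rsum (fun i => x i * sg i k) m.

Lemma chernoff (x : nat -> R) m V lam : 0 < V -> rsum (fun i => x i ^ 2) m <= V -> 0 <= lam ->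
  rsum (fun k => if Rle_dec lam (rsg x m k) then 1 else 0) (2 ^ m) <= 2 ^ m * exp (- (lam ^ 2 / (2 * V))).
Proof. intros HV Hx Hl. set (th := lam / V). assert (Hth : 0 <= th) by (unfold th; apply Rmult_le_pos; [lra|left; apply Rinv_0_lt_compat; lra]).
 apply Rle_trans with (rsum (fun k => exp (th * rsg x m k) * exp (- (th * lam))) (2 ^ m)).
 { apply rsum_le. intros k _. destruct (Rle_dec lam (rsg x m k)).
   rewrite <- exp_plus. apply exp_ge1. nra.
   left. apply Rmult_lt_0_compat; apply exp_pos. }
 rewrite rsum_mult_r.
 assert (E : rsum (fun k => exp (th * rsg x m k)) (2 ^ m) = rprod (fun i => exp (th * x i * 1) + exp (th * x i * -1)) m).
 { rewrite <- (count_prod (fun i s => exp (th * x i * s))). apply rsum_ext. intros k _.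
   unfold rsg. rewrite <- rsum_scal, <- rprod_exp. apply rprod_ext. intros; f_equal; ring. }
 rewrite E.
 apply Rle_trans with (rprod (fun i => 2 * exp ((th * x i) ^ 2 / 2)) m * exp (- (th * lam))).
 { apply Rmult_le_compat_r. left; apply exp_pos. apply rprod_le. intros i _. split.
   left; apply Rplus_lt_0_compat; apply exp_pos. rewrite Rmult_1_r. replace (th * x i * -1) with (- (th * x i)) by ring. apply cosh_le. }
 rewrite rprod_mult, rprod_const, rprod_exp, Rmult_assoc. apply Rmult_le_compat_l. apply pow_le; lra.
 rewrite <- exp_plus. apply exp_mono.
   rewrite (rsum_ext _ (fun i => (th ^ 2 / 2) * x i ^ 2)) by (intros; field). rewrite rsum_scal.
   assert (th ^ 2 / 2 * rsum (fun i => x i ^ 2) m <= th ^ 2 / 2 * V).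
   { apply Rmult_le_compat_l; auto. apply Rmult_le_pos. apply pow_le; auto. lra. }
   assert (th ^ 2 / 2 * V - th * lam = - (lam ^ 2 / (2 * V))) by (unfold th; field; lra). lra.
Qed.

Lemma INR_pow2 n : INR (2 ^ n) = 2 ^ n.
Proof. rewrite pow_INR. simpl. replace (1+1) with 2 by ring. auto. Qed.
Lemma pow2_pos n : 0 < 2 ^ n.
Proof. apply pow_lt; lra. Qed.

Lemma frac_part_eq u (q : nat) f : 0 <= f < 1 -> u = INR q + f -> frac_part u = f.
Proof. intros Hf Hu. rewrite INR_IZR_INZ in Hu. destruct (Int_part_frac_part_spec u (Z.of_nat q) f Hf Hu). auto. Qed.

Lemma rad_sg L k n t : (1 <= n)%nat -> (n < L)%nat ->
  INR k / 2 ^ L < t < (INR k + 1) / 2 ^ L -> rad n t = sg (L - 1 - n) k.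
Proof. intros Hn HL Ht. set (i := (L - 1 - n)%nat). set (d := (2 ^ S i)%nat).
 assert (Hd : (0 < d)%nat) by (unfold d; apply Nat.neq_0_lt_0, Nat.pow_nonzero; lia).
 set (q := (k / d)%nat). set (r := (k mod d)%nat).
 assert (Hk : k = (q * d + r)%nat) by (unfold q, r; rewrite Nat.mul_comm; apply Nat.div_mod_eq).
 assert (Hr : (r < d)%nat) by (apply Nat.mod_upper_bound; lia).
 assert (HdR : INR d = 2 ^ S i) by (unfold d; apply INR_pow2).
 assert (HL2 : 2 ^ L = 2 ^ n * 2 ^ S i) by (rewrite <- pow_add; f_equal; unfold i; lia).
 assert (Hpn := pow2_pos n). assert (Hpi := pow2_pos (S i)).
 set (u := 2 ^ n * t). set (f := u - INR q).
 assert (Hkr : INR k = INR q * INR d + INR r) by (rewrite Hk, plus_INR, mult_INR; auto).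
 assert (Hrd : INR r + 1 <= INR d) by (rewrite <- S_INR; apply le_INR; lia).
 assert (Hu1 : INR k / 2 ^ S i < u).
 { unfold u. rewrite HL2 in Ht. apply Rmult_lt_reg_r with (/ 2 ^ n). apply Rinv_0_lt_compat; auto.
   replace (2 ^ n * t * / 2 ^ n) with t by (field; lra). replace (INR k / 2 ^ S i * / 2 ^ n) with (INR k / (2 ^ n * 2 ^ S i)) by (field; lra). lra. }
 assert (Hu2 : u < (INR k + 1) / 2 ^ S i).
 { unfold u. rewrite HL2 in Ht. apply Rmult_lt_reg_r with (/ 2 ^ n). apply Rinv_0_lt_compat; auto.
   replace (2 ^ n * t * / 2 ^ n) with t by (field; lra). replace ((INR k + 1) / 2 ^ S i * / 2 ^ n) with ((INR k + 1) / (2 ^ n * 2 ^ S i)) by (field; lra). lra. }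
 rewrite Hkr, HdR in Hu1, Hu2. rewrite HdR in Hrd.
 assert (Hf1 : INR r / 2 ^ S i < f).
 { unfold f. replace ((INR q * 2 ^ S i + INR r) / 2 ^ S i) with (INR q + INR r / 2 ^ S i) in Hu1 by (field; lra). lra. }
 assert (Hf2 : f < (INR r + 1) / 2 ^ S i).
 { unfold f. replace ((INR q * 2 ^ S i + INR r + 1) / 2 ^ S i) with (INR q + (INR r + 1) / 2 ^ S i) in Hu2 by (field; lra). lra. }
 assert (Hr0 : 0 <= INR r / 2 ^ S i) by (apply Rmult_le_pos; [apply pos_INR|left; apply Rinv_0_lt_compat; auto]).
 assert (Hr1 : (INR r + 1) / 2 ^ S i <= 1) by (apply Rmult_le_reg_r with (2 ^ S i); auto; field_simplify; lra).
 assert (Hfr : frac_part u = f) by (apply frac_part_eq with q; [lra|unfold f; ring]).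
 unfold rad, rad0. fold u. rewrite Hfr. unfold sg. fold i. fold d. fold r.
 destruct (Req_EM_T f 0) as [E|E]. lra.
 destruct (Nat.ltb_spec r (2 ^ i)) as [Hlt|Hge].
 - assert (INR r + 1 <= 2 ^ i) by (rewrite <- INR_pow2, <- S_INR; apply le_INR; lia).
   destruct (Rlt_dec f (1/2)) as [|N]; auto. exfalso; apply N.
   apply Rlt_le_trans with ((INR r + 1) / 2 ^ S i); auto. simpl. apply Rmult_le_reg_r with (2 * 2 ^ i). pose proof (pow2_pos i); lra.
   field_simplify; try lra. pose proof (pow2_pos i); lra.
 - assert (2 ^ i <= INR r) by (rewrite <- INR_pow2; apply le_INR; lia).
   assert (1/2 <= INR r / 2 ^ S i). { simpl. apply Rmult_le_reg_r with (2 * 2 ^ i). pose proof (pow2_pos i); lra.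
     field_simplify; try lra. pose proof (pow2_pos i); lra. }
   destruct (Rlt_dec f (1/2)). lra. destruct (Req_EM_T f (1/2)). lra. auto.
Qed.

Definition dyadic (t : R) : Prop := exists p k : nat, t = INR k / 2 ^ p.

Lemma rad_dyadic t p k n : t = INR k / 2 ^ p -> (p <= n)%nat -> rad n t = 0.
Proof. intros Ht Hn. unfold rad, rad0.
 assert (frac_part (2 ^ n * t) = 0).
 { apply frac_part_eq with (k * 2 ^ (n - p))%nat. lra. rewrite mult_INR, INR_pow2, Ht.
   replace n with (p + (n - p))%nat at 1 by lia. rewrite pow_add. field. pose proof (pow2_pos p); lra. }
 rewrite H. destruct (Req_EM_T 0 0); [auto|lra]. Qed.

Lemma nondyadic_interval t L : 0 <= t <= 1 -> ~ dyadic t ->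
  exists k, (k < 2 ^ L)%nat /\ INR k / 2 ^ L < t < (INR k + 1) / 2 ^ L.
Proof. intros Ht Hd. set (u := t * 2 ^ L). pose proof (pow2_pos L).
 destruct (base_Int_part u) as [H1 H2]. set (z := Int_part u) in *.
 assert (Hu0 : 0 <= u) by (unfold u; nra).
 assert (Hz : (0 <= z)%Z). { assert (-1 < z)%Z by (apply lt_IZR; simpl; lra). lia. }
 set (k := Z.to_nat z). assert (Hk : INR k = IZR z) by (unfold k; rewrite INR_IZR_INZ, Z2Nat.id; auto).
 assert (Hne : u <> INR k). { intros E. apply Hd. exists L, k. rewrite <- E. unfold u; field; lra. }
 assert (Ht1 : t < 1). { destruct (Rle_lt_or_eq_dec _ _ (proj2 Ht)); auto. exfalso; apply Hd. exists 0%nat, 1%nat. simpl; lra. }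
 exists k. split.
 - apply INR_lt. rewrite INR_pow2. unfold u in *. nra.
 - split; apply Rmult_lt_reg_r with (2 ^ L); auto; unfold Rdiv; rewrite Rmult_assoc, Rinv_l, Rmult_1_r by lra;
   fold u; lra.
Qed.

Definition coef (a : nat -> Cx) (t : R) (n : nat) : Cx := Cscale (INR n * rad n t) (a n).
Definition Qj (a : nat -> Cx) (t : R) (j : nat) (z : Cx) : Cx :=
  csum (fun i => Cmul (coef a t (2 ^ j + i)) (Cpow z i)) (2 ^ j).
Definition sig2 (a : nat -> Cx) (j : nat) : R :=
  rsum (fun i => (INR (2 ^ j + i) * Cnorm (a (2 ^ j + i)%nat)) ^ 2) (2 ^ j).
Definition Vj a j := sig2 a j + (/ 4) ^ j.
Definition lam a j := sqrt (32 * INR j * Vj a j).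
Definition bgood a j := lam a j + 2 * sqrt (Vj a j).

Lemma Vj_pos a j : 0 < Vj a j.
Proof. unfold Vj, sig2. assert (0 < (/4)^j) by (apply pow_lt; lra).
 assert (0 <= rsum (fun i => (INR (2 ^ j + i) * Cnorm (a (2 ^ j + i)%nat)) ^ 2) (2 ^ j))
  by (apply rsum_nonneg; intros; apply pow2_ge_0). lra. Qed.

Lemma coef_bound a j t i : (i < 2 ^ j)%nat -> Cnorm (coef a t (2 ^ j + i)) <= sqrt (Vj a j).
Proof. intros Hi. unfold coef. rewrite Cnorm_scale, Rabs_mult, Rabs_pos_eq by apply pos_INR.
 assert (Hr : Rabs (rad (2 ^ j + i) t) <= 1).
 { unfold rad, rad0. repeat destruct Req_EM_T; repeat destruct Rlt_dec; apply Rabs_le; lra. }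
 assert (H0 : 0 <= INR (2 ^ j + i) * Cnorm (a (2 ^ j + i)%nat)) by (apply Rmult_le_pos; [apply pos_INR|apply Cnorm_ge0]).
 apply Rle_trans with (INR (2 ^ j + i) * Cnorm (a (2 ^ j + i)%nat)).
 { pose proof (Cnorm_ge0 (a (2 ^ j + i)%nat)). pose proof (pos_INR (2^j+i)). pose proof (Rabs_pos (rad (2 ^ j + i) t)).
   apply Rmult_le_compat_r; auto. rewrite <- (Rmult_1_r (INR _)) at 2. apply Rmult_le_compat_l; auto. }
 rewrite <- (sqrt_pow2 _ H0). apply sqrt_le_1_alt. unfold Vj, sig2.
 pose proof (rsum_last_le (fun i => (INR (2 ^ j + i) * Cnorm (a (2 ^ j + i)%nat)) ^ 2) (2 ^ j) i (fun _ => pow2_ge_0 _) Hi).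
 simpl in H. assert (0 < (/4)^j) by (apply pow_lt; lra). simpl. lra. Qed.

Fixpoint rmaxn (f : nat -> R) (n : nat) : R :=
  match n with O => 0 | S m => Rmax (rmaxn f m) (f m) end.
Lemma rmaxn_ge f n i : (i < n)%nat -> f i <= rmaxn f n.
Proof. induction n; intros H; [lia|]. simpl. destruct (Nat.eq_dec i n). subst; apply Rmax_r.
 eapply Rle_trans; [apply IHn; lia|apply Rmax_l]. Qed.
Lemma rmaxn_lt f n c : 0 < c -> (forall i, (i < n)%nat -> f i < c) -> rmaxn f n < c.
Proof. induction n; simpl; intros Hc H; auto. apply Rmax_lub_lt; auto. Qed.
Lemma rmaxn_ex f n c : 0 < c -> c <= rmaxn f n -> exists i, (i < n)%nat /\ c <= f i.
Proof. intros Hc H. destruct (Classical_Prop.classic (exists i, (i < n)%nat /\ c <= f i)) as [|N]; auto.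
 exfalso. assert (rmaxn f n < c); [|lra]. apply rmaxn_lt; auto. intros i Hi.
 destruct (Rlt_le_dec (f i) c); auto. exfalso; apply N; exists i; auto. Qed.

Lemma rsum_ind_le (P : nat -> Prop) (Q : nat -> nat -> Prop) (Pd : forall k, {P k} + {~ P k})
  (Qd : forall i k, {Q i k} + {~ Q i k}) n m :
  (forall k, P k -> exists i, (i < m)%nat /\ Q i k) ->
  rsum (fun k => if Pd k then 1 else 0) n <= rsum (fun i => rsum (fun k => if Qd i k then 1 else 0) n) m.
Proof. intros H. rewrite rsum_swap. apply rsum_le. intros k _. destruct (Pd k) as [p|].
 - destruct (H k p) as [i [Hi Hq]]. apply Rle_trans with (if Qd i k then 1 else 0).
   destruct (Qd i k); [lra|contradiction].
   apply (rsum_last_le (fun i => if Qd i k then 1 else 0)); auto. intros; destruct Qd; lra.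
 - apply rsum_nonneg; intros; destruct Qd; lra. Qed.

Definition clip (w : Cx) : Cx := if Rle_dec (Cnorm w) 1 then w else C0.
Definition Ng (j : nat) : nat := (8 ^ j)%nat.
Definition gridpt (j p q : nat) : Cx :=
  clip ((INR p - INR (Ng j)) / INR (Ng j), (INR q - INR (Ng j)) / INR (Ng j)).

Lemma Cnorm_clip w : Cnorm (clip w) <= 1.
Proof. unfold clip; destruct Rle_dec; auto. rewrite Cnorm_C0; lra. Qed.

Definition Qk (a : nat -> Cx) (j k : nat) (z : Cx) : Cx :=
  csum (fun i => Cmul (Cscale (INR (2 ^ j + i) * sg (2 ^ j - 1 - i) k) (a (2 ^ j + i)%nat)) (Cpow z i)) (2 ^ j).

Lemma pow2_ge1 j : (1 <= 2 ^ j)%nat.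
Proof. apply Nat.neq_0_lt_0, Nat.pow_nonzero; lia. Qed.

Lemma Qj_Qk a t j k z : INR k / 2 ^ (2 ^ S j) < t < (INR k + 1) / 2 ^ (2 ^ S j) -> Qj a t j z = Qk a j k z.
Proof. intros Ht. unfold Qj, Qk. apply csum_ext. intros i Hi. unfold coef. f_equal. f_equal. f_equal.
 pose proof (pow2_ge1 j). assert (E : (2 ^ S j = 2 ^ j + 2 ^ j)%nat) by (simpl; lia).
 rewrite (rad_sg (2 ^ S j) k). f_equal. rewrite E. lia. lia. rewrite E; lia. auto. Qed.

Lemma rsum_shift f n : rsum f (S n) = f 0%nat + rsum (fun i => f (S i)) n.
Proof. induction n. simpl; ring. cbn [rsum] in *. rewrite IHn. ring. Qed.
Lemma rsum_rev f n : rsum f n = rsum (fun i => f (n - 1 - i)%nat) n.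
Proof. induction n. auto. rewrite (rsum_shift (fun i => f (S n - 1 - i)%nat)). cbn [rsum]. rewrite IHn.
 replace (S n - 1 - 0)%nat with n by lia. rewrite Rplus_comm. f_equal. apply rsum_ext. intros i Hi. f_equal. lia. Qed.

Definition xv (M : nat) (h : nat -> R) (i : nat) : R := if Nat.ltb i M then h (M - 1 - i)%nat else 0.

Lemma xv_rsg M h k : rsum (fun i => sg (M - 1 - i) k * h i) M = rsg (xv M h) (M + M) k.
Proof. unfold rsg. rewrite rsum_split. rewrite (rsum_ext (fun i => xv M h (M + i) * sg (M + i) k) (fun _ => 0)).
 2:{ intros i _. unfold xv. destruct (Nat.ltb_spec (M + i) M); [lia|ring]. }
 rewrite (rsum_ext (fun _ => 0) (fun _ => 0 * 0)) by (intros; ring). rewrite rsum_scal, Rmult_0_l, Rplus_0_r.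
 rewrite rsum_rev. apply rsum_ext. intros i Hi. unfold xv. destruct (Nat.ltb_spec i M); [|lia].
 replace (M - 1 - (M - 1 - i))%nat with i by lia. ring. Qed.

Lemma xv_sq M h : rsum (fun i => xv M h i ^ 2) (M + M) = rsum (fun i => h i ^ 2) M.
Proof. rewrite rsum_split. rewrite (rsum_ext (fun i => xv M h (M + i) ^ 2) (fun _ => 0 * 0)).
 2:{ intros i _. unfold xv. destruct (Nat.ltb_spec (M + i) M); [lia|ring]. }
 rewrite rsum_scal, Rmult_0_l, Rplus_0_r. rewrite (rsum_rev (fun i => h i ^ 2)). apply rsum_ext.
 intros i Hi. unfold xv. destruct (Nat.ltb_spec i M); [auto|lia]. Qed.

Lemma fst_scale_sg c s x p : fst (Cmul (Cscale (c * s) x) p) = s * fst (Cmul (Cscale c x) p).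
Proof. destruct x, p; unfold Cmul, Cscale; simpl; ring. Qed.
Lemma snd_scale_sg c s x p : snd (Cmul (Cscale (c * s) x) p) = s * snd (Cmul (Cscale c x) p).
Proof. destruct x, p; unfold Cmul, Cscale; simpl; ring. Qed.

Definition hterm a j z i : Cx := Cmul (Cscale (INR (2 ^ j + i)) (a (2 ^ j + i)%nat)) (Cpow z i).

Lemma fst_Qk a j k z : fst (Qk a j k z) = rsg (xv (2 ^ j) (fun i => fst (hterm a j z i))) (2 ^ j + 2 ^ j) k.
Proof. rewrite <- xv_rsg. unfold Qk. rewrite csum_fst. apply rsum_ext. intros i _. rewrite fst_scale_sg; auto. Qed.
Lemma snd_Qk a j k z : snd (Qk a j k z) = rsg (xv (2 ^ j) (fun i => snd (hterm a j z i))) (2 ^ j + 2 ^ j) k.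
Proof. rewrite <- xv_rsg. unfold Qk. rewrite csum_snd. apply rsum_ext. intros i _. rewrite snd_scale_sg; auto. Qed.

Lemma rsg_opp x n k : - rsg x n k = rsg (fun i => - x i) n k.
Proof. unfold rsg. rewrite <- (Rmult_1_l (rsum _ _)) at 1. rewrite Ropp_mult_distr_l, <- rsum_scal. apply rsum_ext; intros; ring. Qed.

Lemma hterm_sq a j z i : Cnorm z <= 1 -> (i < 2 ^ j)%nat ->
  fst (hterm a j z i) ^ 2 <= (INR (2 ^ j + i) * Cnorm (a (2 ^ j + i)%nat)) ^ 2 /\
  snd (hterm a j z i) ^ 2 <= (INR (2 ^ j + i) * Cnorm (a (2 ^ j + i)%nat)) ^ 2.
Proof. intros Hz Hi. assert (Cnorm (hterm a j z i) <= INR (2 ^ j + i) * Cnorm (a (2 ^ j + i)%nat)).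
 { unfold hterm. rewrite Cnorm_mul, Cnorm_scale, Cnorm_pow, Rabs_pos_eq by apply pos_INR.
   rewrite <- Rmult_1_r. apply Rmult_le_compat_l. apply Rmult_le_pos; [apply pos_INR|apply Cnorm_ge0].
   rewrite <- (pow1 i). apply pow_incr; split; [apply Cnorm_ge0|auto]. }
 pose proof (Cnorm_fst (hterm a j z i)). pose proof (Cnorm_snd (hterm a j z i)).
 pose proof (Rabs_pos (fst (hterm a j z i))). pose proof (Rabs_pos (snd (hterm a j z i))).
 rewrite <- (pow2_abs (fst _)), <- (pow2_abs (snd _)). split; apply pow_incr; lra. Qed.

Lemma sq_sum_bound a j z (comp : Cx -> R) : Cnorm z <= 1 ->
  (forall i, (i < 2 ^ j)%nat -> comp (hterm a j z i) ^ 2 <= (INR (2 ^ j + i) * Cnorm (a (2 ^ j + i)%nat)) ^ 2) ->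
  rsum (fun i => (- xv (2 ^ j) (fun i => comp (hterm a j z i)) i) ^ 2) (2 ^ j + 2 ^ j) <= Vj a j /\
  rsum (fun i => (xv (2 ^ j) (fun i => comp (hterm a j z i)) i) ^ 2) (2 ^ j + 2 ^ j) <= Vj a j.
Proof. intros Hz H. rewrite (rsum_ext (fun i => (- _) ^ 2) (fun i => (xv (2 ^ j) (fun i => comp (hterm a j z i)) i) ^ 2)) by (intros; ring).
 rewrite xv_sq. assert (rsum (fun i => comp (hterm a j z i) ^ 2) (2 ^ j) <= Vj a j); [|auto].
 unfold Vj, sig2. assert (0 < (/4)^j) by (apply pow_lt; lra).
 assert (rsum (fun i => comp (hterm a j z i) ^ 2) (2 ^ j) <= rsum (fun i => (INR (2 ^ j + i) * Cnorm (a (2 ^ j + i)%nat)) ^ 2) (2 ^ j)) by (apply rsum_le; auto).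
 lra. Qed.

Definition ind (P : Prop) (d : {P} + {~ P}) : R := if d then 1 else 0.

Lemma exp_8j j : exp (- (8 * INR j)) <= (/ 256) ^ j.
Proof. pose proof (exp_nat_ge (8 * j)). rewrite mult_INR in H. simpl INR in H.
 replace (1 + 1 + 1 + 1 + 1 + 1 + 1 + 1) with 8 in H by ring.
 rewrite exp_Ropp. replace (2 ^ (8 * j)) with (256 ^ j) in H by (rewrite pow_mult; simpl; f_equal; ring).
 rewrite pow_inv. apply Rinv_le_contravar; auto. apply pow_lt; lra. Qed.

Lemma sq_lt x l : 0 <= x -> x < l -> x ^ 2 < l ^ 2.
Proof. intros; simpl; nra. Qed.

Lemma count_point a j w : (1 <= j)%nat -> Cnorm w <= 1 ->
  rsum (fun k => if Rle_dec (lam a j) (Cnorm (Qk a j k w)) then 1 else 0) (2 ^ (2 ^ j + 2 ^ j))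
  <= 4 * (2 ^ (2 ^ j + 2 ^ j) * (/ 256) ^ j).
Proof. intros Hj Hw. set (L := (2 ^ j + 2 ^ j)%nat). pose proof (Vj_pos a j) as HV.
 set (lh := sqrt (16 * INR j * Vj a j)).
 assert (Hlh : 0 <= lh) by apply sqrt_pos.
 assert (Hj' : 1 <= INR j) by (apply (le_INR 1); auto).
 assert (Hlh2 : lh ^ 2 = 16 * INR j * Vj a j) by (unfold lh; rewrite pow2_sqrt; nra).
 set (xr := xv (2 ^ j) (fun i => fst (hterm a j w i))).
 set (xi := xv (2 ^ j) (fun i => snd (hterm a j w i))).
 assert (Hr := sq_sum_bound a j w fst Hw (fun i Hi => proj1 (hterm_sq a j w i Hw Hi))).
 assert (Hi := sq_sum_bound a j w snd Hw (fun i Hi => proj2 (hterm_sq a j w i Hw Hi))).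
 fold xr in Hr. fold xi in Hi.
 assert (HC : forall x, rsum (fun i => x i ^ 2) L <= Vj a j ->
    rsum (fun k => if Rle_dec lh (rsg x L k) then 1 else 0) (2 ^ L) <= 2 ^ L * (/256) ^ j).
 { intros x Hx. eapply Rle_trans. apply chernoff; eauto. apply Rmult_le_compat_l. apply pow_le; lra.
   replace (lh ^ 2 / (2 * Vj a j)) with (8 * INR j) by (rewrite Hlh2; field; lra). apply exp_8j. }
 apply Rle_trans with (rsum (fun c => rsum (fun k => if Rle_dec lh (rsg (match c with 0 => xr | 1 => (fun i => - xr i) | 2 => xi | _ => (fun i => - xi i) end)%nat L k) then 1 else 0) (2 ^ L)) 4).
 - apply (rsum_ind_le (fun k => lam a j <= Cnorm (Qk a j k w)) (fun c k => lh <= rsg (match c with 0 => xr | 1 => (fun i => - xr i) | 2 => xi | _ => (fun i => - xi i) end)%nat L k)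
     (fun k => Rle_dec _ _) (fun c k => Rle_dec _ _)).
   intros k Hk. pose proof (fst_Qk a j k w) as E1. pose proof (snd_Qk a j k w) as E2. fold L xr xi in E1, E2.
   pose proof (rsg_opp xr L k). pose proof (rsg_opp xi L k).
   assert (Hsq : 32 * INR j * Vj a j <= fst (Qk a j k w) ^ 2 + snd (Qk a j k w) ^ 2).
   { rewrite <- Cnorm_sq. unfold lam in Hk. assert (0 <= 32 * INR j * Vj a j) by nra.
     rewrite <- (pow2_sqrt (32 * INR j * Vj a j)) by auto. apply pow_incr; split; auto. apply sqrt_pos. }
   destruct (Rle_dec (lh ^ 2) (fst (Qk a j k w) ^ 2)) as [H1|H1].
   + assert (Hab : lh <= Rabs (fst (Qk a j k w))). { rewrite <- (pow2_abs (fst (Qk a j k w))) in H1. destruct (Rle_dec lh (Rabs (fst (Qk a j k w)))) as [|Hn]; auto. apply Rnot_le_lt in Hn.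
       assert (Rabs (fst (Qk a j k w)) ^ 2 < lh ^ 2) by (apply sq_lt; [apply Rabs_pos|auto]). lra. }
     destruct (Rle_dec 0 (fst (Qk a j k w))).
     * exists 0%nat; split; [lia|]. rewrite Rabs_pos_eq in Hab by auto. simpl. lra.
     * exists 1%nat; split; [lia|]. rewrite Rabs_left in Hab by lra. simpl. lra.
   + assert (H2 : lh ^ 2 <= snd (Qk a j k w) ^ 2) by lra.
     assert (Hab : lh <= Rabs (snd (Qk a j k w))). { rewrite <- (pow2_abs (snd (Qk a j k w))) in H2. destruct (Rle_dec lh (Rabs (snd (Qk a j k w)))) as [|Hn]; auto. apply Rnot_le_lt in Hn.
       assert (Rabs (snd (Qk a j k w)) ^ 2 < lh ^ 2) by (apply sq_lt; [apply Rabs_pos|auto]). lra. }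
     destruct (Rle_dec 0 (snd (Qk a j k w))).
     * exists 2%nat; split; [lia|]. rewrite Rabs_pos_eq in Hab by auto. simpl. lra.
     * exists 3%nat; split; [lia|]. rewrite Rabs_left in Hab by lra. simpl. lra.
 - simpl rsum. rewrite Rplus_0_l. pose proof (HC xr (proj2 Hr)). pose proof (HC (fun i => - xr i) (proj1 Hr)).
   pose proof (HC xi (proj2 Hi)). pose proof (HC (fun i => - xi i) (proj1 Hi)). lra.
Qed.

Definition Gs (j : nat) : nat := (2 * Ng j + 1)%nat.
Definition gmax a j k : R :=
  rmaxn (fun g => Cnorm (Qk a j k (gridpt j (g / Gs j) (g mod Gs j)))) (Gs j * Gs j).

Lemma lam_pos a j : (1 <= j)%nat -> 0 < lam a j.
Proof. intros Hj. unfold lam. apply sqrt_lt_R0. pose proof (Vj_pos a j).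
 assert (1 <= INR j) by (apply (le_INR 1); auto). nra. Qed.

Lemma Gs_sq j : INR (Gs j * Gs j) <= 9 * 64 ^ j.
Proof. unfold Gs, Ng. rewrite mult_INR, plus_INR, mult_INR, pow_INR. simpl INR.
 assert (1 <= (1 + 1 + 1 + 1 + 1 + 1 + 1 + 1) ^ j) by (apply pow_R1_Rle; lra).
 replace (64 ^ j) with ((1 + 1 + 1 + 1 + 1 + 1 + 1 + 1) ^ j * (1 + 1 + 1 + 1 + 1 + 1 + 1 + 1) ^ j)
   by (rewrite <- Rpow_mult_distr; f_equal; ring). nra. Qed.

Lemma bad_count a j : (1 <= j)%nat ->
  rsum (fun k => if Rle_dec (lam a j) (gmax a j k) then 1 else 0) (2 ^ (2 ^ j + 2 ^ j))
  <= 36 * (2 ^ (2 ^ j + 2 ^ j) * (/ 4) ^ j).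
Proof. intros Hj. eapply Rle_trans.
 apply (rsum_ind_le (fun k => lam a j <= gmax a j k)
   (fun g k => lam a j <= Cnorm (Qk a j k (gridpt j (g / Gs j) (g mod Gs j)))) (fun k => Rle_dec _ _) (fun g k => Rle_dec _ _)).
 { intros k Hk. apply rmaxn_ex in Hk; [exact Hk|apply lam_pos; auto]. }
 eapply Rle_trans. apply rsum_le. intros g _. apply count_point; auto. apply Cnorm_clip.
 rewrite rsum_const. set (L := (2 ^ j + 2 ^ j)%nat).
 assert (0 <= 4 * (2 ^ L * (/ 256) ^ j)) by (apply Rmult_le_pos; [lra|apply Rmult_le_pos; apply pow_le; lra]).
 apply Rle_trans with (9 * 64 ^ j * (4 * (2 ^ L * (/ 256) ^ j))). apply Rmult_le_compat_r; auto. apply Gs_sq.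
 replace ((/4)^j) with (64 ^ j * (/256) ^ j). right; ring.
 rewrite <- Rpow_mult_distr. f_equal. field. Qed.

Lemma floor_nat y : 0 <= y -> exists m : nat, INR m <= y < INR m + 1.
Proof. intros Hy. destruct (base_Int_part y) as [H1 H2]. set (z := Int_part y) in *.
 assert (Hz : (0 <= z)%Z). { assert (-1 < z)%Z by (apply lt_IZR; simpl; lra). lia. }
 exists (Z.to_nat z). rewrite INR_IZR_INZ, Z2Nat.id by auto. lra. Qed.

Lemma coord_approx (N : nat) x : (1 <= N)%nat -> -1 <= x <= 1 ->
  exists p, (p <= 2 * N)%nat /\ Rabs ((INR p - INR N) / INR N) <= Rabs x /\
            Rabs (x - (INR p - INR N) / INR N) <= 1 / INR N.
Proof. intros HN Hx. assert (HNr : 1 <= INR N) by (apply (le_INR 1); auto).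
 destruct (Rle_dec 0 x) as [Hp|Hn].
 - destruct (floor_nat (x * INR N)) as [m [Hm1 Hm2]]. nra.
   assert (m <= N)%nat. { apply INR_le. assert (x * INR N <= INR N) by nra. pose proof (pos_INR m). 
     destruct (Rle_dec (INR m) (INR N)); auto. exfalso. assert (INR N < INR m) by lra. apply INR_lt in H1.
     assert (INR N + 1 <= INR m) by (rewrite <- S_INR; apply le_INR; lia). lra. }
   exists (N + m)%nat. rewrite plus_INR. replace ((INR N + INR m - INR N) / INR N) with (INR m / INR N) by (field; lra).
   split; [lia|]. rewrite (Rabs_pos_eq x) by auto. rewrite Rabs_pos_eq by (apply Rmult_le_pos; [apply pos_INR|left; apply Rinv_0_lt_compat; lra]).
   split. apply Rmult_le_reg_r with (INR N); [lra|]. unfold Rdiv; rewrite Rmult_assoc, Rinv_l, Rmult_1_r by lra. lra.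
   rewrite Rabs_pos_eq. apply Rmult_le_reg_r with (INR N); [lra|]. replace ((x - INR m / INR N) * INR N) with (x * INR N - INR m) by (field; lra).
   replace (1 / INR N * INR N) with 1 by (field; lra). lra.
   apply Rge_le, Rge_minus, Rle_ge. apply Rmult_le_reg_r with (INR N); [lra|]. unfold Rdiv; rewrite Rmult_assoc, Rinv_l, Rmult_1_r by lra. lra.
 - destruct (floor_nat (- x * INR N)) as [m [Hm1 Hm2]]. nra.
   assert (m <= N)%nat. { apply INR_le. assert (- x * INR N <= INR N) by nra. pose proof (pos_INR m). 
     destruct (Rle_dec (INR m) (INR N)); auto. exfalso. assert (INR N < INR m) by lra. apply INR_lt in H1.
     assert (INR N + 1 <= INR m) by (rewrite <- S_INR; apply le_INR; lia). lra. }
   exists (N - m)%nat. rewrite minus_INR by auto. replace ((INR N - INR m - INR N) / INR N) with (- (INR m / INR N)) by (field; lra).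
   split; [lia|]. rewrite (Rabs_left x) by lra. rewrite Rabs_Ropp. rewrite Rabs_pos_eq by (apply Rmult_le_pos; [apply pos_INR|left; apply Rinv_0_lt_compat; lra]).
   split. apply Rmult_le_reg_r with (INR N); [lra|]. unfold Rdiv; rewrite Rmult_assoc, Rinv_l, Rmult_1_r by lra. lra.
   rewrite Rabs_left1. apply Rmult_le_reg_r with (INR N); [lra|].
   replace (- (x - - (INR m / INR N)) * INR N) with (- x * INR N - INR m) by (field; lra). replace (1 / INR N * INR N) with 1 by (field; lra). lra.
   assert (INR m / INR N <= - x) by (apply Rmult_le_reg_r with (INR N); [lra|]; unfold Rdiv; rewrite Rmult_assoc, Rinv_l, Rmult_1_r by lra; lra). lra.
Qed.

Lemma Cpow_lip1 z w i : Cnorm z <= 1 -> Cnorm w <= 1 ->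
  Cnorm (Csub (Cpow z i) (Cpow w i)) <= INR i * Cnorm (Csub z w).
Proof. intros Hz Hw. destruct i. simpl. unfold Cnorm, Csub, C1; simpl.
 replace ((1 - 1) * ((1 - 1) * 1) + (0 - 0) * ((0 - 0) * 1)) with 0 by ring. rewrite sqrt_0; lra.
 pose proof (Cpow_lip z w 1 i Hz Hw). rewrite pow1, Rmult_1_r in H. auto. Qed.

Lemma Csub_Cmul c u v : Csub (Cmul c u) (Cmul c v) = Cmul c (Csub u v).
Proof. destruct c, u, v; unfold Csub, Cmul; simpl; f_equal; ring. Qed.

Lemma Qj_lip a t j z z' : Cnorm z <= 1 -> Cnorm z' <= 1 ->
  Cnorm (Csub (Qj a t j z) (Qj a t j z')) <= INR (2 ^ j) * (INR (2 ^ j) * sqrt (Vj a j) * Cnorm (Csub z z')).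
Proof. intros Hz Hz'. unfold Qj. rewrite Csub_csum. eapply Rle_trans. apply Cnorm_csum.
 rewrite <- rsum_const. apply rsum_le. intros i Hi. rewrite Csub_Cmul, Cnorm_mul.
 pose proof (coef_bound a j t i Hi). pose proof (Cpow_lip1 z z' i Hz Hz').
 assert (INR i * Cnorm (Csub z z') <= INR (2 ^ j) * Cnorm (Csub z z')).
 { apply Rmult_le_compat_r. apply Cnorm_ge0. apply le_INR; lia. }
 pose proof (Cnorm_ge0 (coef a t (2 ^ j + i))). pose proof (Cnorm_ge0 (Csub (Cpow z i) (Cpow z' i))).
 pose proof (sqrt_pos (Vj a j)).
 apply Rle_trans with (sqrt (Vj a j) * (INR (2 ^ j) * Cnorm (Csub z z'))).
 apply Rmult_le_compat; auto; lra. right; ring. Qed.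

Lemma Cnorm_le_sum w : Cnorm w <= Rabs (fst w) + Rabs (snd w).
Proof. unfold Cnorm. rewrite <- (sqrt_pow2 (Rabs (fst w) + Rabs (snd w))) by (pose proof (Rabs_pos (fst w)); pose proof (Rabs_pos (snd w)); lra).
 apply sqrt_le_1_alt. rewrite <- (pow2_abs (fst w)), <- (pow2_abs (snd w)).
 pose proof (Rabs_pos (fst w)); pose proof (Rabs_pos (snd w)). simpl; nra. Qed.

Lemma good_bound a t j k : (1 <= j)%nat ->
  INR k / 2 ^ (2 ^ S j) < t < (INR k + 1) / 2 ^ (2 ^ S j) -> gmax a j k < lam a j ->
  forall z, Cnorm z <= 1 -> Cnorm (Qj a t j z) <= bgood a j.
Proof. intros Hj Ht Hg z Hz. destruct z as [x y].
 assert (HN : (1 <= Ng j)%nat) by (unfold Ng; apply Nat.neq_0_lt_0, Nat.pow_nonzero; lia).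
 set (N := Ng j) in *. assert (HNr : 1 <= INR N) by (apply (le_INR 1); auto).
 pose proof (Cnorm_fst (x, y)) as Hx. pose proof (Cnorm_snd (x, y)) as Hy. simpl in Hx, Hy.
 destruct (coord_approx N x HN) as [p [Hp [Hp1 Hp2]]]. pose proof (Rle_abs x); pose proof (Rabs_maj2 x); pose proof (Rle_abs y); pose proof (Rabs_maj2 y); split; lra.
 destruct (coord_approx N y HN) as [q [Hq [Hq1 Hq2]]]. pose proof (Rle_abs x); pose proof (Rabs_maj2 x); pose proof (Rle_abs y); pose proof (Rabs_maj2 y); split; lra.
 set (z' := ((INR p - INR N) / INR N, (INR q - INR N) / INR N)).
 assert (Hz'z : Cnorm z' <= Cnorm (x, y)).
 { unfold Cnorm, z'; cbn [fst snd]. apply sqrt_le_1_alt. rewrite <- (pow2_abs x), <- (pow2_abs y).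
   rewrite <- (pow2_abs ((INR p - INR N) / INR N)), <- (pow2_abs ((INR q - INR N) / INR N)).
   pose proof (Rabs_pos ((INR p - INR N) / INR N)). pose proof (Rabs_pos ((INR q - INR N) / INR N)).
   apply Rplus_le_compat; apply pow_incr; auto. }
 assert (Hz' : Cnorm z' <= 1) by lra.
 assert (Hgp : gridpt j p q = z') by (unfold gridpt, clip; fold N; destruct Rle_dec; [auto|contradiction]).
 assert (HG : (0 < Gs j)%nat) by (unfold Gs; lia).
 set (g := (p * Gs j + q)%nat).
 assert (Hgq : (g / Gs j = p)%nat /\ (g mod Gs j = q)%nat).
 { unfold g. split. rewrite Nat.div_add_l by lia. rewrite Nat.div_small. lia. unfold Gs; fold N; lia.
   rewrite Nat.add_comm, Nat.Div0.mod_add. apply Nat.mod_small. unfold Gs; fold N; lia. }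
 assert (Hglt : (g < Gs j * Gs j)%nat). { unfold g. assert (p < Gs j)%nat by (unfold Gs; fold N; lia).
   assert (q < Gs j)%nat by (unfold Gs; fold N; lia). nia. }
 assert (Hq' : Cnorm (Qk a j k z') < lam a j).
 { eapply Rle_lt_trans; [|apply Hg]. unfold gmax. rewrite <- Hgp.
   destruct Hgq as [E1 E2]. rewrite <- E1, <- E2 at 1. fold N.
   apply (rmaxn_ge (fun g => Cnorm (Qk a j k (gridpt j (g / Gs j) (g mod Gs j))))). auto. }
 rewrite <- (Qj_Qk a t j k z') in Hq' by auto.
 pose proof (Qj_lip a t j (x, y) z' Hz Hz').
 assert (Hd : Cnorm (Csub (x, y) z') <= 2 / INR N).
 { eapply Rle_trans. apply Cnorm_le_sum. unfold Csub, z'; simpl. replace (2 / INR N) with (1 / INR N + 1 / INR N) by (field; lra). lra. }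
 assert (H4 : INR (2 ^ j) * (INR (2 ^ j) * sqrt (Vj a j) * (2 / INR N)) <= 2 * sqrt (Vj a j)).
 { unfold N, Ng. rewrite !pow_INR. simpl INR. replace (1 + 1 + 1 + 1 + 1 + 1 + 1 + 1) with 8 by ring.
   replace (1 + 1) with 2 by ring.
   replace (2 ^ j * (2 ^ j * sqrt (Vj a j) * (2 / 8 ^ j))) with (2 * sqrt (Vj a j) * ((2 * 2) ^ j / 8 ^ j)).
   2:{ rewrite Rpow_mult_distr. field. apply pow_nonzero; lra. }
   assert ((2 * 2) ^ j / 8 ^ j <= 1). { apply Rmult_le_reg_r with (8 ^ j). apply pow_lt; lra.
     unfold Rdiv. rewrite Rmult_assoc, Rinv_l, Rmult_1_r, Rmult_1_l by (apply pow_nonzero; lra). apply pow_incr; lra. }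
   pose proof (sqrt_pos (Vj a j)). assert (0 <= (2 * 2) ^ j / 8 ^ j) by (apply Rmult_le_pos; [apply pow_le; lra|left; apply Rinv_0_lt_compat, pow_lt; lra]).
   apply Rle_trans with (2 * sqrt (Vj a j) * 1); [apply Rmult_le_compat_l; lra|lra]. }
 assert (INR (2 ^ j) * (INR (2 ^ j) * sqrt (Vj a j) * Cnorm (Csub (x, y) z')) <= INR (2 ^ j) * (INR (2 ^ j) * sqrt (Vj a j) * (2 / INR N))).
 { apply Rmult_le_compat_l. apply pos_INR. apply Rmult_le_compat_l; auto. apply Rmult_le_pos. apply pos_INR. apply sqrt_pos. }
 pose proof (Cnorm_sub_tri (Qj a t j (x, y)) (Qj a t j z')). unfold bgood. lra.
Qed.

Lemma U_formula x n : rsum (fun k => (INR k + 1) * x ^ k) n * (1 - x) ^ 2 = 1 - (INR n + 1) * x ^ n + INR n * x ^ S n.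
Proof. induction n. simpl; ring. cbn [rsum]. rewrite Rmult_plus_distr_r, IHn, S_INR. simpl; ring. Qed.
Lemma U_bound x n : 0 <= x < 1 -> rsum (fun k => (INR k + 1) * x ^ k) n <= / (1 - x) ^ 2.
Proof. intros Hx. assert (Hp : 0 < (1 - x) ^ 2) by (apply pow_lt; lra).
 apply Rmult_le_reg_r with ((1 - x) ^ 2); auto. rewrite U_formula, Rinv_l by lra.
 assert (0 <= x ^ n) by (apply pow_le; lra). pose proof (pos_INR n). replace (x ^ S n) with (x * x ^ n) by (simpl; ring).
 assert (INR n * (x * x ^ n) <= (INR n + 1) * x ^ n) by (assert (0 <= INR n * x ^ n) by (apply Rmult_le_pos; auto); nra). lra. Qed.
Lemma T_formula x n : rsum (fun k => (INR k + 1) * (INR k + 2) / 2 * x ^ k) n * (1 - x)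
  = rsum (fun k => (INR k + 1) * x ^ k) n - INR n * (INR n + 1) / 2 * x ^ n.
Proof. induction n. simpl; field. cbn [rsum]. rewrite Rmult_plus_distr_r, IHn, S_INR. simpl; field. Qed.
Lemma T_bound x n : 0 <= x < 1 -> rsum (fun k => (INR k + 1) * (INR k + 2) * x ^ k) n <= 2 / (1 - x) ^ 3.
Proof. intros Hx. rewrite (rsum_ext _ (fun k => 2 * ((INR k + 1) * (INR k + 2) / 2 * x ^ k))) by (intros; field).
 rewrite rsum_scal. unfold Rdiv. apply Rmult_le_compat_l. lra.
 apply Rmult_le_reg_r with (1 - x). lra. rewrite T_formula.
 pose proof (U_bound x n Hx). assert (0 <= INR n * (INR n + 1) / 2 * x ^ n).
 { apply Rmult_le_pos. pose proof (pos_INR n). apply Rmult_le_pos; [nra|lra]. apply pow_le; lra. }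
 replace (/ (1 - x) ^ 3 * (1 - x)) with (/ (1 - x) ^ 2) by (field; lra). lra. Qed.

Lemma sum_f_R0_minus' (f g : nat -> R) N : sum_f_R0 (fun k => f k - g k) N = sum_f_R0 f N - sum_f_R0 g N.
Proof. rewrite !sum_f_R0_rsum. unfold Rminus. rewrite rsum_plus. f_equal.
 rewrite (rsum_ext _ (fun i => -1 * g i)) by (intros; ring). rewrite rsum_scal; ring. Qed.

Lemma ser_conv_pos (p : nat -> R) B : (forall k, 0 <= p k) -> (forall n, rsum p n <= B) ->
  exists l, Un_cv (fun N => sum_f_R0 p N) l.
Proof. intros Hp HB. destruct (growing_cv (fun N => sum_f_R0 p N)) as [l Hl].
 - intros N. simpl. specialize (Hp (S N)). lra.
 - exists B. intros y [N HN]. rewrite HN, sum_f_R0_rsum. auto.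
 - exists l; auto. Qed.

Lemma ser_conv (x b : nat -> R) B : (forall k, Rabs (x k) <= b k) -> (forall n, rsum b n <= B) ->
  exists l, Un_cv (fun N => sum_f_R0 x N) l.
Proof. intros Hx HB.
 destruct (ser_conv_pos (fun k => (Rabs (x k) + x k) / 2) B) as [l1 H1].
 { intros k. pose proof (Rle_abs (x k)). pose proof (Rabs_maj2 (x k)). lra. }
 { intros n. eapply Rle_trans; [|apply (HB n)]. apply rsum_le. intros i _. specialize (Hx i).
   pose proof (Rle_abs (x i)). pose proof (Rabs_maj2 (x i)). lra. }
 destruct (ser_conv_pos (fun k => (Rabs (x k) - x k) / 2) B) as [l2 H2].
 { intros k. pose proof (Rle_abs (x k)). pose proof (Rabs_maj2 (x k)). lra. }
 { intros n. eapply Rle_trans; [|apply (HB n)]. apply rsum_le. intros i _. specialize (Hx i).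
   pose proof (Rle_abs (x i)). pose proof (Rabs_maj2 (x i)). lra. }
 exists (l1 - l2). pose proof (CV_minus _ _ _ _ H1 H2). intros e He. destruct (H e He) as [N HN].
 exists N. intros n Hn. specialize (HN n Hn). rewrite <- sum_f_R0_minus' in HN.
 rewrite !sum_f_R0_rsum in *. rewrite (rsum_ext _ x) in HN. auto. intros; field. Qed.

Lemma lim_norm_le (x y : nat -> R) a b X : Un_cv x a -> Un_cv y b ->
  (forall N, Cnorm (x N, y N) <= X) -> Cnorm (a, b) <= X.
Proof. intros Hx Hy HX. apply is_lim_seq_Reals in Hx. apply is_lim_seq_Reals in Hy.
 assert (H : is_lim_seq (fun N => Cnorm (x N, y N)) (Cnorm (a, b))).
 { unfold Cnorm; simpl. apply (is_lim_seq_continuous sqrt (fun N => x N ^ 2 + y N ^ 2)).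
   apply continuity_pt_sqrt. nra. simpl. apply is_lim_seq_plus'; apply is_lim_seq_mult'; auto;
   apply is_lim_seq_mult'; auto; apply is_lim_seq_const. }
 pose proof (is_lim_seq_le _ _ _ _ HX H (is_lim_seq_const X)). simpl in H0. auto. Qed.

Lemma Csum_fst u N : sum_f_R0 (fun k => fst (u k)) N = fst (csum u (S N)).
Proof. rewrite csum_fst, sum_f_R0_rsum; auto. Qed.
Lemma Csum_snd u N : sum_f_R0 (fun k => snd (u k)) N = snd (csum u (S N)).
Proof. rewrite csum_snd, sum_f_R0_rsum; auto. Qed.

Lemma Csum_diff_le u v w w' X : Csum_to u w -> Csum_to v w' ->
  (forall N, Cnorm (Csub (csum u (S N)) (csum v (S N))) <= X) -> Cnorm (Csub w w') <= X.
Proof. intros [H1 H2] [H3 H4] HX. unfold Csub. apply (lim_norm_le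
  (fun N => fst (csum u (S N)) - fst (csum v (S N))) (fun N => snd (csum u (S N)) - snd (csum v (S N)))).
 - pose proof (CV_minus _ _ _ _ H1 H3). intros e He; destruct (H e He) as [M HM]; exists M; intros n Hn.
   rewrite <- !Csum_fst. apply HM; auto.
 - pose proof (CV_minus _ _ _ _ H2 H4). intros e He; destruct (H e He) as [M HM]; exists M; intros n Hn.
   rewrite <- !Csum_snd. apply HM; auto.
 - intros N. apply HX. Qed.

Lemma Csum_subseq_le u w X (phi : nat -> nat) : (forall n, (phi n < phi (S n))%nat) -> Csum_to u w ->
  (forall J, Cnorm (csum u (S (phi J))) <= X) -> Cnorm w <= X.
Proof. intros Hphi [H1 H2] HX. destruct w as [w1 w2].
 apply (lim_norm_le (fun J => fst (csum u (S (phi J)))) (fun J => snd (csum u (S (phi J))))).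
 - apply is_lim_seq_Reals. apply is_lim_seq_Reals in H1.
   apply (is_lim_seq_subseq _ _ phi (eventually_subseq phi Hphi)) in H1.
   eapply is_lim_seq_ext; [|apply H1]. intros n; simpl; rewrite Csum_fst; auto.
 - apply is_lim_seq_Reals. apply is_lim_seq_Reals in H2.
   apply (is_lim_seq_subseq _ _ phi (eventually_subseq phi Hphi)) in H2.
   eapply is_lim_seq_ext; [|apply H2]. intros n; simpl; rewrite Csum_snd; auto.
 - intros J. specialize (HX J). destruct (csum u (S (phi J))); apply HX. Qed.

Lemma rad_abs n t : Rabs (rad n t) <= 1.
Proof. unfold rad, rad0. repeat destruct Req_EM_T; repeat destruct Rlt_dec; apply Rabs_le; lra. Qed.

Lemma coef_norm a t n A : Cnorm (a n) <= A -> Cnorm (coef a t n) <= INR n * A.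
Proof. intros H. unfold coef. rewrite Cnorm_scale, Rabs_mult, Rabs_pos_eq by apply pos_INR.
 pose proof (rad_abs n t). pose proof (pos_INR n). pose proof (Cnorm_ge0 (a n)). pose proof (Rabs_pos (rad n t)).
 rewrite Rmult_assoc. apply Rmult_le_compat_l; auto. rewrite <- (Rmult_1_l A). apply Rmult_le_compat; auto. Qed.

Lemma fderiv_coef a t z k : fderiv_term a t z k = Cmul (coef a t (S k)) (Cpow z k).
Proof. reflexivity. Qed.

Lemma term_bound a t A z s k : (forall n, (1 <= n)%nat -> Cnorm (a n) <= A) -> Cnorm z <= s ->
  Cnorm (fderiv_term a t z k) <= A * ((INR k + 1) * s ^ k).
Proof. intros HA Hz. rewrite fderiv_coef, Cnorm_mul, Cnorm_pow.
 pose proof (coef_norm a t (S k) A (HA (S k) ltac:(lia))). rewrite S_INR in H.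
 assert (Cnorm z ^ k <= s ^ k) by (apply pow_incr; split; [apply Cnorm_ge0|auto]).
 pose proof (Cnorm_ge0 (coef a t (S k))). pose proof (pow_le (Cnorm z) k (Cnorm_ge0 z)).
 replace (A * ((INR k + 1) * s ^ k)) with ((INR k + 1) * A * s ^ k) by ring. apply Rmult_le_compat; auto. Qed.

Lemma conv_F a t A z s : (forall n, (1 <= n)%nat -> Cnorm (a n) <= A) -> Cnorm z <= s -> s < 1 ->
  exists w, Csum_to (fderiv_term a t z) w.
Proof. intros HA Hz Hs. assert (Hs0 : 0 <= s) by (pose proof (Cnorm_ge0 z); lra).
 assert (HA0 : 0 <= A) by (pose proof (HA 1%nat ltac:(lia)); pose proof (Cnorm_ge0 (a 1%nat)); lra).
 assert (HB : forall n, rsum (fun k => A * ((INR k + 1) * s ^ k)) n <= A * / (1 - s) ^ 2).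
 { intros n. rewrite rsum_scal. apply Rmult_le_compat_l; auto. apply U_bound; lra. }
 destruct (ser_conv (fun k => fst (fderiv_term a t z k)) _ _ (fun k => Rle_trans _ _ _ (Cnorm_fst _) (term_bound a t A z s k HA Hz)) HB) as [l1 H1].
 destruct (ser_conv (fun k => snd (fderiv_term a t z k)) _ _ (fun k => Rle_trans _ _ _ (Cnorm_snd _) (term_bound a t A z s k HA Hz)) HB) as [l2 H2].
 exists (l1, l2). split; auto. Qed.

Lemma Mof_ex a t r : exists m, is_lub (modset a t r) m \/ (~ (exists m', is_lub (modset a t r) m') /\ m = 0).
Proof. destruct (classic (exists m', is_lub (modset a t r) m')) as [[m Hm]|H]. exists m; auto. exists 0; auto. Qed.

Definition Mof a t r : R := proj1_sig (constructive_indefinite_description _ (Mof_ex a t r)).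

Lemma Mof_lub a t r : (exists m, is_lub (modset a t r) m) -> is_lub (modset a t r) (Mof a t r).
Proof. intros H. unfold Mof. destruct (constructive_indefinite_description _ (Mof_ex a t r)) as [m [Hm|[Hn Heq]]]; simpl; auto. contradiction. Qed.

Lemma Csum_norm_le u w X : Csum_to u w -> (forall N, Cnorm (csum u (S N)) <= X) -> Cnorm w <= X.
Proof. intros H HX. apply (Csum_subseq_le u w X (fun n => n)); auto. Qed.

Definition Abound (a : nat -> Cx) (A : R) := forall n, (1 <= n)%nat -> Cnorm (a n) <= A.

Lemma Abound_pos a A : Abound a A -> 0 <= A.
Proof. intros H. pose proof (H 1%nat ltac:(lia)). pose proof (Cnorm_ge0 (a 1%nat)). lra. Qed.

Lemma Cnorm_real r : 0 <= r -> Cnorm (r, 0) = r.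
Proof. intros. unfold Cnorm; simpl. replace (r * (r * 1) + 0 * (0 * 1)) with (r ^ 2) by ring. apply sqrt_pow2; auto. Qed.

Lemma lub_exists a t A r : Abound a A -> 0 <= r < 1 -> exists m, is_lub (modset a t r) m.
Proof. intros HA Hr. destruct (completeness (modset a t r)) as [m Hm].
 - exists (A / (1 - r) ^ 2). intros m [z [w [Hz [Hw Hm]]]]. subst m. apply (Csum_norm_le _ _ _ Hw).
   intros N. eapply Rle_trans. apply Cnorm_csum. apply Rle_trans with (rsum (fun k => A * ((INR k + 1) * r ^ k)) (S N)).
   apply rsum_le; intros; apply term_bound; auto; lra. rewrite rsum_scal. apply Rmult_le_compat_l. eapply Abound_pos; eauto.
   apply U_bound; lra.
 - destruct (conv_F a t A (r, 0) r HA) as [w Hw]. rewrite Cnorm_real; lra. lra.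
   exists (Cnorm w), (r, 0), w. rewrite Cnorm_real by lra. auto.
 - exists m; auto. Qed.

Lemma M_lub a t A r : Abound a A -> 0 <= r < 1 -> is_lub (modset a t r) (Mof a t r).
Proof. intros. apply Mof_lub. eapply lub_exists; eauto. Qed.

Lemma M_ge0 a t A r : Abound a A -> 0 <= r < 1 -> 0 <= Mof a t r.
Proof. intros HA Hr. destruct (M_lub a t A r HA Hr) as [H1 _].
 destruct (conv_F a t A (r, 0) r HA) as [w Hw]. rewrite Cnorm_real; lra. lra.
 apply Rle_trans with (Cnorm w). apply Cnorm_ge0. apply H1. exists (r, 0), w. rewrite Cnorm_real by lra. auto. Qed.

Lemma M_le a t A r X : Abound a A -> 0 <= r < 1 ->
  (forall z w, Cnorm z = r -> Csum_to (fderiv_term a t z) w -> Cnorm w <= X) -> Mof a t r <= X.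
Proof. intros HA Hr H. destruct (M_lub a t A r HA Hr) as [_ H2]. apply H2.
 intros m [z [w [Hz [Hw Hm]]]]. subst m. eauto. Qed.

Lemma M_ge a t A r z w : Abound a A -> 0 <= r < 1 -> Cnorm z = r -> Csum_to (fderiv_term a t z) w -> Cnorm w <= Mof a t r.
Proof. intros HA Hr Hz Hw. destruct (M_lub a t A r HA Hr) as [H1 _]. apply H1. exists z, w; auto. Qed.

Lemma F_lip a t A s z z' w w' : Abound a A -> 0 <= s < 1 -> Cnorm z <= s -> Cnorm z' <= s ->
  Csum_to (fderiv_term a t z) w -> Csum_to (fderiv_term a t z') w' ->
  Cnorm (Csub w w') <= A * (2 / (1 - s) ^ 3) * Cnorm (Csub z z').
Proof. intros HA Hs Hz Hz' Hw Hw'. apply (Csum_diff_le _ _ _ _ _ Hw Hw'). intros N.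
 rewrite Csub_csum. eapply Rle_trans. apply Cnorm_csum. rewrite rsum_shift.
 assert (HA0 := Abound_pos a A HA). pose proof (Cnorm_ge0 (Csub z z')) as Hd.
 rewrite !fderiv_coef, Csub_Cmul, Cnorm_mul. simpl Cpow.
 replace (Csub C1 C1) with C0 by (unfold Csub, C1, C0; f_equal; simpl; ring). rewrite Cnorm_C0, Rmult_0_r, Rplus_0_l.
 apply Rle_trans with (rsum (fun p => A * Cnorm (Csub z z') * ((INR p + 1) * (INR p + 2) * s ^ p)) N).
 - apply rsum_le. intros p _. rewrite !fderiv_coef, Csub_Cmul, Cnorm_mul.
   pose proof (coef_norm a t (S (S p)) A (HA (S (S p)) ltac:(lia))). rewrite !S_INR in H.
   pose proof (Cpow_lip z z' s p Hz Hz'). rewrite S_INR in H0.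
   pose proof (Cnorm_ge0 (coef a t (S (S p)))). pose proof (Cnorm_ge0 (Csub (Cpow z (S p)) (Cpow z' (S p)))).
   apply Rle_trans with ((INR p + 1 + 1) * A * ((INR p + 1) * s ^ p * Cnorm (Csub z z'))).
   apply Rmult_le_compat; auto. right; ring.
 - rewrite rsum_scal. pose proof (T_bound s N Hs).
   replace (A * (2 / (1 - s) ^ 3) * Cnorm (Csub z z')) with (A * Cnorm (Csub z z') * (2 / (1 - s) ^ 3)) by ring.
   apply Rmult_le_compat_l; auto. apply Rmult_le_pos; auto. Qed.

Lemma pow_eq_zero_ct x n : x ^ n = 0 -> x = 0.
Proof. intros H. destruct (Req_dec x 0); auto. exfalso; apply (pow_nonzero x n); auto. Qed.

Lemma Mof_lip a t A s r r' : Abound a A -> 0 <= s < 1 -> 0 <= r <= s -> 0 <= r' <= s ->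
  Mof a t r <= Mof a t r' + A * (2 / (1 - s) ^ 3) * Rabs (r - r').
Proof. intros HA Hs Hr Hr'. apply (M_le a t A r _ HA ltac:(lra)). intros z w Hz Hw.
 assert (Hz' : exists z', Cnorm z' = r' /\ Cnorm (Csub z z') <= Rabs (r - r')).
 { destruct (Req_dec r 0) as [E|E].
   - exists (r', 0). rewrite Cnorm_real by lra. split; [auto|rewrite E in Hz |- *].
     assert (Hz0 : fst z = 0 /\ snd z = 0). { pose proof (Cnorm_sq z). rewrite Hz in H. simpl in H.
       assert (0 <= fst z ^ 2) by apply pow2_ge_0. assert (0 <= snd z ^ 2) by apply pow2_ge_0.
       split; apply (pow_eq_zero_ct _ 2); lra. }
     unfold Csub; destruct Hz0 as [E1 E2]; rewrite E1, E2. unfold Cnorm; simpl. replace ((0 - r') * ((0 - r') * 1) + (0 - 0) * ((0 - 0) * 1)) with (r' ^ 2) by ring. rewrite sqrt_pow2 by lra.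
     rewrite Rminus_0_l, Rabs_Ropp, Rabs_pos_eq; lra.
   - exists (Cscale (r' / r) z). split.
     + rewrite Cnorm_scale, Hz, Rabs_pos_eq. field; auto. apply Rmult_le_pos; [lra|left; apply Rinv_0_lt_compat; lra].
     + replace (Csub z (Cscale (r' / r) z)) with (Cscale (1 - r' / r) z) by (destruct z; unfold Csub, Cscale; simpl; f_equal; ring).
       rewrite Cnorm_scale, Hz. replace (Rabs (1 - r' / r) * r) with (Rabs ((1 - r' / r) * r)).
       right; f_equal; field; auto. rewrite Rabs_mult, (Rabs_pos_eq r); lra. }
 destruct Hz' as [z' [Hz'1 Hz'2]].
 destruct (conv_F a t A z' s HA) as [w' Hw']. lra. lra.
 pose proof (F_lip a t A s z z' w w' HA Hs ltac:(lra) ltac:(lra) Hw Hw').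
 pose proof (M_ge a t A r' z' w' HA ltac:(lra) Hz'1 Hw').
 pose proof (Cnorm_sub_tri w w').
 assert (0 <= A * (2 / (1 - s) ^ 3)). { apply Rmult_le_pos. eapply Abound_pos; eauto.
   apply Rmult_le_pos; [lra|left; apply Rinv_0_lt_compat, pow_lt; lra]. }
 assert (A * (2 / (1 - s) ^ 3) * Cnorm (Csub z z') <= A * (2 / (1 - s) ^ 3) * Rabs (r - r')) by (apply Rmult_le_compat_l; auto).
 lra. Qed.

Definition Mfun a t (r : R) : R := Mof a t (Rabs r).

Lemma lip_cont f x : (exists d K, 0 < d /\ forall y, Rabs (y - x) < d -> Rabs (f y - f x) <= K * Rabs (y - x)) -> continuity_pt f x.
Proof. intros [d [K [Hd H]]]. intros e He. exists (Rmin d (e / (Rabs K + 1))). split.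
 apply Rmin_pos; auto. apply Rdiv_lt_0_compat; auto. pose proof (Rabs_pos K); lra.
 intros y [_ Hy]. simpl in *. unfold R_dist in *. pose proof (Rmin_l d (e / (Rabs K + 1))). pose proof (Rmin_r d (e / (Rabs K + 1))).
 specialize (H y ltac:(lra)). pose proof (Rabs_pos (y - x)). pose proof (Rle_abs K). pose proof (Rabs_pos K).
 apply Rle_lt_trans with (K * Rabs (y - x)); auto.
 apply Rle_lt_trans with ((Rabs K + 1) * Rabs (y - x)). nra.
 apply Rlt_le_trans with ((Rabs K + 1) * (e / (Rabs K + 1))). apply Rmult_lt_compat_l; lra. right; field; lra. Qed.

Lemma Mfun_cont a t A x : Abound a A -> Rabs x < 1 -> continuity_pt (Mfun a t) x.
Proof. intros HA Hx. apply lip_cont. set (s := (Rabs x + 1) / 2).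
 exists ((1 - Rabs x) / 2), (A * (2 / (1 - s) ^ 3)). split. lra.
 intros y Hy. unfold Mfun. pose proof (Rabs_triang_inv y x). pose proof (Rabs_triang_inv x y). rewrite Rabs_minus_sym in Hy.
 pose proof (Rabs_pos x). pose proof (Rabs_pos y).
 assert (Hs : 0 <= s < 1) by (unfold s; lra). assert (Hys : Rabs y <= s) by (unfold s; rewrite Rabs_minus_sym in Hy; lra).
 assert (Hxs : Rabs x <= s) by (unfold s; lra).
 pose proof (Mof_lip a t A s (Rabs y) (Rabs x) HA Hs ltac:(lra) ltac:(lra)).
 pose proof (Mof_lip a t A s (Rabs x) (Rabs y) HA Hs ltac:(lra) ltac:(lra)).
 assert (HK : 0 <= A * (2 / (1 - s) ^ 3)). { apply Rmult_le_pos. eapply Abound_pos; eauto.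
   apply Rmult_le_pos; [lra|left; apply Rinv_0_lt_compat, pow_lt; lra]. }
 assert (Rabs (Rabs y - Rabs x) <= Rabs (y - x)) by apply Rabs_triang_inv2.
 rewrite (Rabs_minus_sym (Rabs x)) in H4.
 assert (A * (2 / (1 - s) ^ 3) * Rabs (Rabs y - Rabs x) <= A * (2 / (1 - s) ^ 3) * Rabs (y - x)) by (apply Rmult_le_compat_l; auto).
 apply Rabs_le. lra. Qed.

Definition wgt (r : R) : R := (1 - r) * (ln (1 / (1 - r))) ^ 2.

Lemma wgt_cont x : x < 1 -> continuity_pt wgt x.
Proof. intros Hx. apply derivable_continuous_pt.
 assert (H : is_derive wgt x ((-1) * (ln (1 / (1 - x))) ^ 2 + (1 - x) * (2 * ln (1 / (1 - x)) * (/ (1 - x))))).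
 { unfold wgt. auto_derive. repeat split; try lra. apply Rdiv_lt_0_compat; lra.
   replace (1 * / (1 + - x)) with (1 / (1 - x)) by (field; lra). field. lra. }
 apply is_derive_Reals in H. exact (exist _ _ H). Qed.

Lemma integrand_cont a t A x : Abound a A -> 0 <= x < 1 ->
  continuity_pt (fun r => (1 - r) * (ln (1 / (1 - r))) ^ 2 * (Mfun a t r) ^ 2) x.
Proof. intros HA Hx. change (continuity_pt (mult_fct wgt (mult_fct (Mfun a t) (mult_fct (Mfun a t) (fct_cte 1)))) x).
 assert (HM : continuity_pt (Mfun a t) x) by (apply (Mfun_cont a t A); auto; rewrite Rabs_pos_eq; lra).
 apply continuity_pt_mult. apply wgt_cont; lra. apply continuity_pt_mult; auto.
 apply continuity_pt_mult; auto. apply continuity_pt_const. intros u v; auto. Qed.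

Lemma integrand_int a t A s : Abound a A -> 0 <= s < 1 ->
  Riemann_integrable (fun r => (1 - r) * (ln (1 / (1 - r))) ^ 2 * (Mfun a t r) ^ 2) 0 s.
Proof. intros HA Hs. apply continuity_implies_RiemannInt. lra. intros x Hx. apply (integrand_cont a t A); auto; lra. Qed.

Definition pp (k : nat) : R := 1 - (/ 2) ^ k.

Lemma int_pieces (G : R -> R) (c : nat -> R) :
  (forall x, 0 <= x < 1 -> 0 <= G x) ->
  (forall k x, pp k <= x <= pp (S k) -> G x <= c k) ->
  forall K s (pr : Riemann_integrable G 0 s), 0 <= s <= pp K -> RiemannInt pr <= rsum (fun k => c k * (/ 2) ^ (S k)) K.
Proof. intros HG Hc. assert (Hpp : forall k, 0 <= pp k < 1). { intros k. unfold pp.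
   assert (0 < (/2)^k) by (apply pow_lt; lra). assert ((/2)^k <= 1) by (apply pow_le1 || (rewrite <- (pow1 k); apply pow_incr; lra)). lra. }
 assert (Hpk : forall k, pp (S k) - pp k = (/ 2) ^ S k) by (intros; unfold pp; simpl; field).
 assert (Hc0 : forall k, 0 <= c k). { intros k. apply Rle_trans with (G (pp k)). apply HG; auto. apply Hc.
   specialize (Hpk k). assert (0 < (/2)^S k) by (apply pow_lt; lra). lra. }
 induction K; intros s pr Hs.
 - unfold pp in Hs; simpl in Hs. assert (s = 0) by lra. subst s. rewrite RiemannInt_P9. simpl; lra.
 - cbn [rsum]. assert (0 <= c K * (/ 2) ^ S K) by (apply Rmult_le_pos; auto; apply pow_le; lra).
   destruct (Rle_dec s (pp K)) as [Hle|Hgt].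
   + specialize (IHK s pr ltac:(lra)). lra.
   + assert (pr1 : Riemann_integrable G 0 (pp K)) by (apply RiemannInt_P22 with s; auto; specialize (Hpp K); lra).
     assert (pr2 : Riemann_integrable G (pp K) s) by (apply RiemannInt_P23 with 0; auto; specialize (Hpp K); lra).
     rewrite <- (RiemannInt_P26 pr1 pr2 pr). specialize (IHK (pp K) pr1 ltac:(specialize (Hpp K); lra)).
     assert (RiemannInt pr2 <= RiemannInt (RiemannInt_P14 (pp K) s (c K))).
     { apply RiemannInt_P19. lra. intros x Hx. unfold fct_cte. apply Hc. lra. }
     rewrite RiemannInt_P15 in H0. specialize (Hpk K).
     assert (c K * (s - pp K) <= c K * (/ 2) ^ S K) by (apply Rmult_le_compat_l; auto; lra). lra.
Qed.

Lemma pp_reach s : 0 <= s < 1 -> exists K, s <= pp K.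
Proof. intros Hs. destruct (pow_lt_1_zero (/2) ltac:(rewrite Rabs_pos_eq; lra) (1 - s) ltac:(lra)) as [K HK].
 exists K. specialize (HK K (Nat.le_refl K)). rewrite Rabs_pos_eq in HK by (apply pow_le; lra). unfold pp; lra. Qed.

Lemma pow2_S J : (2 ^ S J - 1 = (2 ^ J - 1) + 2 ^ J)%nat.
Proof. pose proof (pow2_ge1 J). simpl. lia. Qed.

Lemma rsum_blocks f J : rsum f (2 ^ J - 1) = rsum (fun j => rsum (fun i => f (2 ^ j - 1 + i)%nat) (2 ^ j)) J.
Proof. induction J. simpl; auto. rewrite pow2_S, rsum_split, IHJ. cbn [rsum]. auto. Qed.
Lemma csum_blocks u J : csum u (2 ^ J - 1) = csum (fun j => csum (fun i => u (2 ^ j - 1 + i)%nat) (2 ^ j)) J.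
Proof. induction J. simpl; auto. rewrite pow2_S, csum_split, IHJ. cbn [csum]. auto. Qed.

Lemma block_eq a t z j : csum (fun i => fderiv_term a t z (2 ^ j - 1 + i)%nat) (2 ^ j) =
  Cmul (Cpow z (2 ^ j - 1)) (Qj a t j z).
Proof. unfold Qj. rewrite Cmul_csum. apply csum_ext. intros i Hi. rewrite fderiv_coef.
 pose proof (pow2_ge1 j). replace (S (2 ^ j - 1 + i)) with (2 ^ j + i)%nat by lia.
 rewrite Cpow_add. rewrite Cmul_assoc, (Cmul_comm (coef a t _)), <- Cmul_assoc. auto. Qed.

Lemma partial_bound a t (beta : nat -> R) rho z J : 0 <= rho <= 1 -> Cnorm z <= rho ->
  (forall j z, Cnorm z <= 1 -> Cnorm (Qj a t j z) <= beta j) ->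
  Cnorm (csum (fderiv_term a t z) (2 ^ J - 1)) <= rsum (fun j => beta j * rho ^ (2 ^ j - 1)) J.
Proof. intros Hr Hz Hb. rewrite csum_blocks. eapply Rle_trans. apply Cnorm_csum.
 apply rsum_le. intros j _. rewrite block_eq, Cnorm_mul, Cnorm_pow.
 assert (Hz1 : Cnorm z <= 1) by lra. specialize (Hb j z Hz1).
 pose proof (Cnorm_ge0 (Qj a t j z)). pose proof (pow_le (Cnorm z) (2 ^ j - 1) (Cnorm_ge0 z)).
 assert (Cnorm z ^ (2 ^ j - 1) <= rho ^ (2 ^ j - 1)) by (apply pow_incr; split; [apply Cnorm_ge0|auto]).
 rewrite Rmult_comm. apply Rmult_le_compat; auto. Qed.

Definition rho (k : nat) : R := 1 - (/ 2) ^ S k.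

Lemma rho_bounds k : 0 <= rho k < 1.
Proof. unfold rho. assert (0 < (/2)^S k) by (apply pow_lt; lra).
 assert ((/2)^S k <= 1) by (rewrite <- (pow1 (S k)); apply pow_incr; lra). lra. Qed.

Lemma rho_pow1 k j : rho k ^ (2 ^ j - 1) <= 1.
Proof. rewrite <- (pow1 (2 ^ j - 1)). apply pow_incr. pose proof (rho_bounds k); lra. Qed.

Lemma rho_pow k j : rho k ^ (2 ^ j - 1) <= 64 * 4 ^ k * (/ 4) ^ j.
Proof. pose proof (rho_bounds k) as Hr.
 destruct (le_lt_dec j 1) as [Hj|Hj].
 - eapply Rle_trans. apply rho_pow1. assert (1 <= 4 ^ k) by (apply pow_R1_Rle; lra).
   assert ((/4) ^ j >= /4). { destruct j as [|[|]]; simpl; lra || lia. } nra.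
 - set (m := (2 ^ (j - 2))%nat). assert (Hm : (2 * m <= 2 ^ j - 1)%nat).
   { unfold m. replace j with (2 + (j - 2))%nat at 2 by lia. rewrite Nat.pow_add_r. pose proof (pow2_ge1 (j - 2)). simpl. lia. }
   apply Rle_trans with (rho k ^ (2 * m)).
   { replace (2 ^ j - 1)%nat with (2 * m + (2 ^ j - 1 - 2 * m))%nat by lia. rewrite pow_add.
     rewrite <- (Rmult_1_r (rho k ^ (2 * m))) at 2. apply Rmult_le_compat_l. apply pow_le; lra.
     rewrite <- (pow1 (2 ^ j - 1 - 2 * m)). apply pow_incr; lra. }
   set (x := (/ 2) ^ S k). assert (Hx : 0 < x <= 1) by (unfold x; split; [apply pow_lt; lra|rewrite <- (pow1 (S k)); apply pow_incr; lra]).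
   pose proof (pow_decay x m ltac:(lra)). fold x in Hr. unfold rho; fold x.
   assert (HmR : INR m = 2 ^ (j - 2)) by (unfold m; apply INR_pow2).
   assert (Hmx : INR m * x = 2 ^ (j - 2) * (/ 2) ^ S k) by (rewrite HmR; auto).
   assert (0 < INR m * x) by (rewrite Hmx; apply Rmult_lt_0_compat; [apply pow2_pos|apply pow_lt; lra]).
   assert (Hp : 0 <= (1 - x) ^ m) by (apply pow_le; lra).
   assert (Hq : (1 - x) ^ m <= / (INR m * x)). { apply Rmult_le_reg_r with (INR m * x); auto.
     rewrite Rinv_l by lra. nra. }
   rewrite pow_mult. replace ((1 - x) ^ 2) with ((1 - x) * (1 - x)) by ring.
   rewrite (Rpow_mult_distr (1 - x) (1 - x) m).
   apply Rle_trans with (/ (INR m * x) * / (INR m * x)). apply Rmult_le_compat; auto.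
   rewrite Hmx. assert (Ej : (/4)^j = (/4)^(j-2) * (/4)^2) by (rewrite <- pow_add; f_equal; lia).
   rewrite Ej. replace (4 ^ k) with (2 ^ k * 2 ^ k) by (rewrite <- Rpow_mult_distr; f_equal; lra).
   replace ((/4) ^ (j - 2)) with ((/2) ^ (j - 2) * (/2) ^ (j - 2)) by (rewrite <- Rpow_mult_distr; f_equal; lra).
   rewrite !pow_inv. replace (2 ^ S k) with (2 * 2 ^ k) by (simpl; ring). right. field. split; apply pow_nonzero; lra.
Qed.

Lemma rsum_prod f g n : rsum f n * rsum g n = rsum (fun i => rsum (fun j => f i * g j) n) n.
Proof. rewrite <- rsum_mult_r. apply rsum_ext. intros i _. rewrite rsum_scal. auto. Qed.

Lemma CS_weighted (b m c : nat -> R) n : (forall j, 0 < c j) -> (forall j, 0 <= m j) ->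
  (rsum (fun j => b j * m j) n) ^ 2 <= rsum (fun j => b j ^ 2 * c j * m j) n * rsum (fun j => m j / c j) n.
Proof. intros Hc Hm. replace ((rsum (fun j => b j * m j) n) ^ 2) with (rsum (fun j => b j * m j) n * rsum (fun j => b j * m j) n) by ring.
 rewrite !rsum_prod.
 apply Rle_trans with (rsum (fun i => rsum (fun j => / 2 * ((b i ^ 2 * c i * m i) * (m j / c j)) + / 2 * ((b j ^ 2 * c j * m j) * (m i / c i))) n) n).
 - apply rsum_le; intros i _; apply rsum_le; intros j _.
   specialize (Hc i) as Hci. specialize (Hc j) as Hcj. specialize (Hm i) as Hmi. specialize (Hm j) as Hmj.
   assert (0 <= (b i * c i - b j * c j) ^ 2) by apply pow2_ge_0.
   assert (0 <= m i * m j / (c i * c j)) by (apply Rmult_le_pos; [nra|left; apply Rinv_0_lt_compat; nra]).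
   assert (0 <= (b i * c i - b j * c j) ^ 2 * (m i * m j / (c i * c j))) by (apply Rmult_le_pos; auto).
   assert (/ 2 * (b i ^ 2 * c i * m i * (m j / c j)) + / 2 * (b j ^ 2 * c j * m j * (m i / c i)) - b i * m i * (b j * m j)
     = / 2 * ((b i * c i - b j * c j) ^ 2 * (m i * m j / (c i * c j)))) by (field; lra).
   assert (0 <= / 2 * ((b i * c i - b j * c j) ^ 2 * (m i * m j / (c i * c j)))) by (apply Rmult_le_pos; lra).
   lra.
 - set (f := fun i => b i ^ 2 * c i * m i). set (g := fun j => m j / c j).
   change (rsum (fun i => rsum (fun j => / 2 * (f i * g j) + / 2 * (f j * g i)) n) n <= rsum (fun i => rsum (fun j => f i * g j) n) n).
   rewrite (rsum_ext _ (fun i => / 2 * rsum (fun j => f i * g j) n + / 2 * rsum (fun j => f j * g i) n)).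
   2:{ intros i _. rewrite <- !rsum_scal, <- rsum_plus. auto. }
   rewrite rsum_plus, !rsum_scal. rewrite (rsum_swap (fun i j => f j * g i)). lra. Qed.

Lemma rsum_lt_part (f : nat -> R) j K : (forall k, 0 <= f k) ->
  rsum (fun k => if Nat.ltb k j then f k else 0) K <= rsum f j.
Proof. intros Hf. destruct (le_lt_dec K j).
 - apply Rle_trans with (rsum f K). apply rsum_le. intros i Hi. destruct (Nat.ltb_spec i j); [lra|lia].
   apply rsum_mono; auto.
 - replace K with (j + (K - j))%nat by lia. rewrite rsum_split.
   rewrite (rsum_ext _ f) by (intros i Hi; destruct (Nat.ltb_spec i j); [auto|lia]).
   rewrite (rsum_ext (fun i => if Nat.ltb (j + i) j then f (j + i)%nat else 0) (fun _ => 0 * 0)) by (intros i Hi; destruct (Nat.ltb_spec (j + i) j); [lia|ring]).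
   rewrite rsum_scal. lra. Qed.

Lemma rsum_ge_part (g : nat -> R) j K G : (forall i, 0 <= g i) -> (forall n, rsum g n <= G) ->
  rsum (fun k => if Nat.ltb k j then 0 else g (k - j)%nat) K <= G.
Proof. intros Hg HG. assert (HG0 : 0 <= G) by (apply Rle_trans with (rsum g 0); [simpl; lra|auto]).
 destruct (le_lt_dec K j).
 - rewrite (rsum_ext _ (fun _ => 0 * 0)) by (intros i Hi; destruct (Nat.ltb_spec i j); [ring|lia]). rewrite rsum_scal; lra.
 - replace K with (j + (K - j))%nat by lia. rewrite rsum_split.
   rewrite (rsum_ext (fun k => if Nat.ltb k j then 0 else g (k - j)%nat) (fun _ => 0 * 0)) by (intros i Hi; destruct (Nat.ltb_spec i j); [ring|lia]).
   rewrite rsum_scal. rewrite (rsum_ext (fun i => if Nat.ltb (j + i) j then 0 else g (j + i - j)%nat) g). specialize (HG (K - j)%nat). lra.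
   intros i Hi. destruct (Nat.ltb_spec (j + i) j); [lia|]. f_equal; lia. Qed.

Definition mkj (k j : nat) : R := rho k ^ (2 ^ j - 1).
Lemma mkj_pos k j : 0 <= mkj k j.
Proof. unfold mkj. apply pow_le. pose proof (rho_bounds k); lra. Qed.

Lemma W_bound k J : rsum (fun j => mkj k j / (/ 2) ^ j) J <= 129 * 2 ^ k.
Proof.
 apply Rle_trans with (rsum (fun j => (if Nat.ltb j k then 2 ^ j else 0) + (if Nat.ltb j k then 0 else 64 * 2 ^ k * (/ 2) ^ (j - k))) J).
 - apply rsum_le. intros j _. unfold mkj. rewrite pow_inv. unfold Rdiv. rewrite Rinv_inv.
   destruct (Nat.ltb_spec j k).
   + pose proof (rho_pow1 k j). pose proof (pow2_pos j). nra.
   + pose proof (rho_pow k j). pose proof (pow2_pos j).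
     replace (64 * 2 ^ k * (/ 2) ^ (j - k)) with (64 * 4 ^ k * (/ 4) ^ j * 2 ^ j).
     2:{ rewrite !pow_inv. replace (4 ^ k) with (2 ^ k * 2 ^ k) by (rewrite <- Rpow_mult_distr; f_equal; lra).
         replace (4 ^ j) with (2 ^ j * 2 ^ j) by (rewrite <- Rpow_mult_distr; f_equal; lra).
         replace (2 ^ j) with (2 ^ k * 2 ^ (j - k)) by (rewrite <- pow_add; f_equal; lia). field.
         split; apply pow_nonzero; lra. }
     nra.
 - rewrite rsum_plus. pose proof (rsum_lt_part (fun j => 2 ^ j) k J (fun j => pow_le 2 j ltac:(lra))).
   rewrite rsum_pow2 in H.
   pose proof (rsum_ge_part (fun i => 64 * 2 ^ k * (/ 2) ^ i) k J (128 * 2 ^ k)).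
   assert (Hg : forall i, 0 <= 64 * 2^k * (/2)^i) by (intros; apply Rmult_le_pos; [apply Rmult_le_pos; [lra|apply pow_le; lra]|apply pow_le; lra]).
   specialize (H0 Hg).
   assert (forall n, rsum (fun i => 64 * 2 ^ k * (/ 2) ^ i) n <= 128 * 2 ^ k).
   { intros n. rewrite rsum_scal, rsum_geom_half. pose proof (pow_lt (/2) n ltac:(lra)). pose proof (pow2_pos k).
     assert (0 <= 2 ^ k * (/ 2) ^ n) by (apply Rmult_le_pos; lra). nra. }
   specialize (H0 H1). pose proof (pow2_pos k). lra.
Qed.

Definition wk (k : nat) : R := (/ 2) ^ (2 * k + 1) * (INR k + 1) ^ 2.

Lemma D_bound j K : rsum (fun k => wk k * (129 * 2 ^ k) * mkj k j) K <= 5000 * ((INR j + 1) ^ 2 * (/ 2) ^ j).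
Proof. set (C1 := 129 / 2 * 64 * (INR j + 1) ^ 2 * (/ 4) ^ j). set (C2 := 129 / 2 * (INR j + 1) ^ 2 * (/ 2) ^ j).
 assert (HC1 : 0 <= C1) by (unfold C1; apply Rmult_le_pos; [pose proof (pow2_ge_0 (INR j + 1)); lra|apply pow_le; lra]).
 assert (HC2 : 0 <= C2) by (unfold C2; apply Rmult_le_pos; [pose proof (pow2_ge_0 (INR j + 1)); lra|apply pow_le; lra]).
 apply Rle_trans with (rsum (fun k => (if Nat.ltb k j then C1 * 2 ^ k else 0) +
    (if Nat.ltb k j then 0 else C2 * ((INR (k - j) + 1) ^ 2 * (/ 2) ^ (k - j)))) K).
 - apply rsum_le. intros k _. unfold wk.
   assert (E : (/ 2) ^ (2 * k + 1) * (INR k + 1) ^ 2 * (129 * 2 ^ k) = 129 / 2 * (INR k + 1) ^ 2 * (/ 2) ^ k).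
   { rewrite pow_add, pow_mult, !pow_inv. replace (2 ^ 2) with 4 by (simpl; ring).
     replace (4 ^ k) with (2 ^ k * 2 ^ k) by (rewrite <- Rpow_mult_distr; f_equal; lra). simpl. field. apply pow_nonzero; lra. }
   rewrite E. pose proof (mkj_pos k j). pose proof (pos_INR k). pose proof (pos_INR j).
   destruct (Nat.ltb_spec k j).
   + rewrite Rplus_0_r. pose proof (rho_pow k j). fold (mkj k j) in H3.
     assert ((INR k + 1) ^ 2 <= (INR j + 1) ^ 2) by (apply pow_incr; split; [lra|]; apply Rplus_le_compat_r, le_INR; lia).
     assert (Hk : (/ 2) ^ k * (64 * 4 ^ k * (/ 4) ^ j) = 64 * (/4) ^ j * 2 ^ k).
     { replace (4 ^ k) with (2 ^ k * 2 ^ k) by (rewrite <- Rpow_mult_distr; f_equal; lra). rewrite pow_inv. field. apply pow_nonzero; lra. }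
     apply Rle_trans with (129 / 2 * (INR k + 1) ^ 2 * ((/ 2) ^ k * (64 * 4 ^ k * (/ 4) ^ j))).
     { rewrite <- Rmult_assoc. apply Rmult_le_compat_l; auto. apply Rmult_le_pos. apply Rmult_le_pos. lra. apply pow2_ge_0. apply pow_le; lra. }
     rewrite Hk. unfold C1. pose proof (pow_le (/4) j ltac:(lra)). pose proof (pow2_pos k).
     assert (0 <= 64 * (/ 4) ^ j * 2 ^ k) by (apply Rmult_le_pos; [apply Rmult_le_pos|]; lra).
     replace (129 / 2 * 64 * (INR j + 1) ^ 2 * (/ 4) ^ j * 2 ^ k) with (129 / 2 * (INR j + 1) ^ 2 * (64 * (/ 4) ^ j * 2 ^ k)) by ring.
     apply Rmult_le_compat_r; auto. lra.
   + rewrite Rplus_0_l. pose proof (rho_pow1 k j). fold (mkj k j) in H3.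
     set (i := (k - j)%nat). assert (Hki : INR k = INR j + INR i) by (unfold i; rewrite <- plus_INR; f_equal; lia).
     assert (Hi := pos_INR i).
     assert ((INR k + 1) ^ 2 <= (INR j + 1) ^ 2 * (INR i + 1) ^ 2).
     { rewrite <- Rpow_mult_distr. apply pow_incr. split. lra. rewrite Hki. nra. }
     assert (E2 : (/ 2) ^ k = (/ 2) ^ j * (/ 2) ^ i) by (rewrite <- pow_add; f_equal; unfold i; lia).
     apply Rle_trans with (129 / 2 * (INR k + 1) ^ 2 * (/ 2) ^ k).
     { rewrite <- (Rmult_1_r (129 / 2 * (INR k + 1) ^ 2 * (/ 2) ^ k)) at 2. apply Rmult_le_compat_l; auto.
       apply Rmult_le_pos; [apply Rmult_le_pos; [lra|apply pow2_ge_0]|apply pow_le; lra]. }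
     rewrite E2. unfold C2. pose proof (pow_le (/2) j ltac:(lra)). pose proof (pow_le (/2) i ltac:(lra)).
     assert (0 <= (/ 2) ^ j * (/ 2) ^ i) by (apply Rmult_le_pos; auto).
     replace (129 / 2 * (INR j + 1) ^ 2 * (/ 2) ^ j * ((INR i + 1) ^ 2 * (/ 2) ^ i)) with (129 / 2 * ((INR j + 1) ^ 2 * (INR i + 1) ^ 2) * ((/ 2) ^ j * (/ 2) ^ i)) by ring.
     apply Rmult_le_compat_r; auto. lra.
 - rewrite rsum_plus. pose proof (rsum_lt_part (fun k => C1 * 2 ^ k) j K (fun k => Rmult_le_pos _ _ HC1 (pow_le 2 k ltac:(lra)))).
   rewrite rsum_scal, rsum_pow2 in H.
   assert (Hg : forall i, 0 <= C2 * ((INR i + 1) ^ 2 * (/ 2) ^ i)) by (intros; apply Rmult_le_pos; auto; apply Rmult_le_pos; [apply pow2_ge_0|apply pow_le; lra]).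
   pose proof (rsum_ge_part (fun i => C2 * ((INR i + 1) ^ 2 * (/ 2) ^ i)) j K (C2 * 12) Hg).
   assert (forall n, rsum (fun i => C2 * ((INR i + 1) ^ 2 * (/ 2) ^ i)) n <= C2 * 12).
   { intros n. rewrite rsum_scal. apply Rmult_le_compat_l; auto. apply rsum_sq_half_le. }
   specialize (H0 H1).
   assert (C1 * (2 ^ j - 1) <= 129 * 32 * ((INR j + 1) ^ 2 * (/ 2) ^ j)).
   { unfold C1. assert (E : (/ 4) ^ j * 2 ^ j = (/ 2) ^ j).
     { replace (/4) with (/2 * /2) by field. rewrite Rpow_mult_distr, !pow_inv. field. apply pow_nonzero; lra. }
     pose proof (pow2_ge_0 (INR j + 1)). pose proof (pow_le (/4) j ltac:(lra)).
     assert (0 <= 129 / 2 * 64 * (INR j + 1) ^ 2 * (/ 4) ^ j) by (apply Rmult_le_pos; [|auto]; lra).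
     apply Rle_trans with (129 / 2 * 64 * (INR j + 1) ^ 2 * (/ 4) ^ j * 2 ^ j). apply Rmult_le_compat_l; auto. lra.
     replace (129 / 2 * 64 * (INR j + 1) ^ 2 * (/ 4) ^ j * 2 ^ j) with (129 * 32 * ((INR j + 1) ^ 2 * ((/ 4) ^ j * 2 ^ j))) by field.
     rewrite E. lra. }
   assert (C2 * 12 = 129 / 2 * 12 * ((INR j + 1) ^ 2 * (/ 2) ^ j)) by (unfold C2; field). pose proof (pow2_ge_0 (INR j + 1)). pose proof (pow_le (/2) j ltac:(lra)).
   assert (0 <= (INR j + 1) ^ 2 * (/ 2) ^ j) by (apply Rmult_le_pos; auto). cbv beta in H, H0. lra.
Qed.

Lemma ln_le' x y : 0 < x -> x <= y -> ln x <= ln y.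
Proof. intros Hx Hxy. destruct (Rle_lt_or_eq_dec _ _ Hxy). left; apply ln_increasing; auto. subst; lra. Qed.
Lemma ln_nonneg x : 1 <= x -> 0 <= ln x.
Proof. intros. rewrite <- ln_1. apply ln_le'; lra. Qed.
Lemma ln2_le1 : ln 2 <= 1.
Proof. rewrite <- (ln_exp 1). apply ln_le'. lra. pose proof exp1_gt2. lra. Qed.

Definition uh (a : nat -> Cx) (k : nat) : R := Cnorm (a (S k)) ^ 2 * ln (INR (S k)) ^ 3.

Lemma uh_nonneg a k : 0 <= uh a k.
Proof. unfold uh. apply Rmult_le_pos. apply pow2_ge_0. apply pow_le, ln_nonneg.
 rewrite S_INR; pose proof (pos_INR k); lra. Qed.

Lemma hyp_partial a l : Un_cv (fun N => sum_f_R0 (fun k => Cnorm (a (S k)) ^ 2 * (ln (INR (S k))) ^ 3) N) l ->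
  forall n, rsum (uh a) n <= l.
Proof. intros H n. assert (Hg : forall N, sum_f_R0 (uh a) N <= l).
 { intros N. apply (growing_ineq (fun N => sum_f_R0 (uh a) N)); auto. intros M. simpl. pose proof (uh_nonneg a (S M)). lra. }
 destruct n. simpl. specialize (Hg 0%nat). simpl in Hg. pose proof (uh_nonneg a 0). lra.
 rewrite <- sum_f_R0_rsum. auto. Qed.

Lemma A_exists a l : Un_cv (fun N => sum_f_R0 (fun k => Cnorm (a (S k)) ^ 2 * (ln (INR (S k))) ^ 3) N) l ->
  exists A, Abound a A.
Proof. intros H. pose proof (hyp_partial a l H) as Hp.
 exists (sqrt (Rabs l) + Cnorm (a 1%nat) + Cnorm (a 2%nat)). intros n Hn.
 pose proof (sqrt_pos (Rabs l)). pose proof (Cnorm_ge0 (a 1%nat)). pose proof (Cnorm_ge0 (a 2%nat)).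
 destruct n as [|[|[|n]]]. lia. lra. lra.
 assert (Hl : 1 <= ln (INR (S (S (S n))))).
 { rewrite <- (ln_exp 1). apply ln_le'. apply exp_pos. rewrite !S_INR. pose proof exp_le_3. pose proof (pos_INR n). lra. }
 assert (Hu : uh a (S (S n)) <= l). { eapply Rle_trans; [|apply (Hp (S (S (S n))))]. apply rsum_last_le; [apply uh_nonneg|lia]. }
 unfold uh in Hu. assert (1 <= ln (INR (S (S (S n)))) ^ 3) by (rewrite <- (pow1 3); apply pow_incr; lra).
 assert (Cnorm (a (S (S (S n)))) ^ 2 <= Rabs l). { pose proof (pow2_ge_0 (Cnorm (a (S (S (S n)))))). pose proof (Rle_abs l). nra. }
 assert (Cnorm (a (S (S (S n)))) <= sqrt (Rabs l)). { rewrite <- (sqrt_pow2 (Cnorm _)) by apply Cnorm_ge0. apply sqrt_le_1_alt; auto. }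
 lra. Qed.

Lemma key_sum a l : Un_cv (fun N => sum_f_R0 (fun k => Cnorm (a (S k)) ^ 2 * (ln (INR (S k))) ^ 3) N) l ->
  forall J, rsum (fun j => INR j ^ 3 * (/ 4) ^ j * sig2 a j) J <= 32 * l.
Proof. intros H J. pose proof (hyp_partial a l H (2 ^ J - 1)) as Hp. rewrite rsum_blocks in Hp.
 apply Rle_trans with (rsum (fun j => 32 * rsum (fun i => uh a (2 ^ j - 1 + i)%nat) (2 ^ j)) J).
 2:{ rewrite rsum_scal. lra. }
 apply rsum_le. intros j _. unfold sig2. rewrite <- rsum_scal, <- rsum_scal. apply rsum_le. intros i Hi.
 destruct j.
 - replace (INR 0 ^ 3) with 0 by (simpl; ring). rewrite !Rmult_0_l. pose proof (uh_nonneg a (2 ^ 0 - 1 + i)). lra.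
 - set (n := (2 ^ S j + i)%nat). replace (S (2 ^ S j - 1 + i)) with n by (unfold n; pose proof (pow2_ge1 (S j)); lia).
   unfold uh. replace (S (2 ^ S j - 1 + i)) with n by (unfold n; pose proof (pow2_ge1 (S j)); lia).
   assert (Hn1 : 2 ^ S j <= INR n) by (unfold n; rewrite <- INR_pow2; apply le_INR; lia).
   assert (Hn2 : INR n <= 2 * 2 ^ S j) by (unfold n; rewrite plus_INR, INR_pow2; assert (INR i <= 2 ^ S j) by (rewrite <- INR_pow2; apply le_INR; lia); lra).
   assert (Hln : INR (S j) / 2 <= ln (INR n)).
   { apply Rle_trans with (ln (2 ^ S j)). rewrite ln_pow by lra. pose proof ln_lt_2. pose proof (pos_INR (S j)). nra.
     apply ln_le'; auto. apply pow2_pos. }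
   assert (Hj3 : INR (S j) ^ 3 <= 8 * ln (INR n) ^ 3).
   { replace (8 * ln (INR n) ^ 3) with ((2 * ln (INR n)) ^ 3) by ring. apply pow_incr. pose proof (pos_INR (S j)). lra. }
   assert (Hn4 : (/ 4) ^ S j * INR n ^ 2 <= 4).
   { assert (INR n ^ 2 <= 4 * 4 ^ S j). { replace (4 * 4 ^ S j) with ((2 * 2 ^ S j) ^ 2).
       apply pow_incr; split; auto. pose proof (pos_INR n); lra.
       replace (4 ^ S j) with (2 ^ S j * 2 ^ S j) by (rewrite <- Rpow_mult_distr; f_equal; lra). ring. }
     rewrite pow_inv. apply Rmult_le_reg_l with (4 ^ S j). apply pow_lt; lra.
     rewrite <- Rmult_assoc, Rinv_r, Rmult_1_l by (apply pow_nonzero; lra). lra. }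
   rewrite Rpow_mult_distr. pose proof (pow2_ge_0 (Cnorm (a n))). pose proof (pow2_ge_0 (INR n)).
   pose proof (pow_le (/4) (S j) ltac:(lra)). pose proof (pow_le (INR (S j)) 3 (pos_INR _)).
   apply Rle_trans with ((8 * ln (INR n) ^ 3) * ((/ 4) ^ S j * INR n ^ 2) * Cnorm (a n) ^ 2).
   { replace (INR (S j) ^ 3 * (/ 4) ^ S j * (INR n ^ 2 * Cnorm (a n) ^ 2)) with (INR (S j) ^ 3 * ((/ 4) ^ S j * INR n ^ 2) * Cnorm (a n) ^ 2) by ring.
     apply Rmult_le_compat_r; auto. apply Rmult_le_compat_r; auto. apply Rmult_le_pos; auto. }
   assert (0 <= ln (INR n) ^ 3) by (apply pow_le; apply ln_nonneg; apply Rle_trans with (2 ^ S j); auto; apply pow_R1_Rle; lra).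
   assert (8 * ln (INR n) ^ 3 * ((/ 4) ^ S j * INR n ^ 2) <= 8 * ln (INR n) ^ 3 * 4) by (apply Rmult_le_compat_l; lra).
   nra.
Qed.

Definition crude A j : R := INR (2 ^ j) * (INR (2 ^ S j) * A).
Definition beta a A (J0 j : nat) : R := if Nat.ltb j J0 then crude A j else bgood a j.

Lemma Qj_crude a t A j z : Abound a A -> Cnorm z <= 1 -> Cnorm (Qj a t j z) <= crude A j.
Proof. intros HA Hz. unfold Qj, crude. eapply Rle_trans. apply Cnorm_csum. rewrite <- rsum_const.
 apply rsum_le. intros i Hi. rewrite Cnorm_mul, Cnorm_pow.
 pose proof (coef_norm a t (2 ^ j + i) A (HA (2 ^ j + i)%nat ltac:(pose proof (pow2_ge1 j); lia))).
 assert (INR (2 ^ j + i) <= INR (2 ^ S j)) by (apply le_INR; simpl; lia).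
 assert (HA0 := Abound_pos a A HA).
 assert (Cnorm z ^ i <= 1) by (rewrite <- (pow1 i); apply pow_incr; split; [apply Cnorm_ge0|auto]).
 pose proof (pow_le _ i (Cnorm_ge0 z)). pose proof (Cnorm_ge0 (coef a t (2 ^ j + i))).
 apply Rle_trans with (INR (2 ^ j + i) * A * 1). apply Rmult_le_compat; auto. rewrite Rmult_1_r.
 apply Rmult_le_compat_r; auto. Qed.

Lemma crude_pos A j : 0 <= A -> 0 <= crude A j.
Proof. intros. unfold crude. apply Rmult_le_pos. apply pos_INR. apply Rmult_le_pos; auto; apply pos_INR. Qed.
Lemma bgood_pos a j : 0 <= bgood a j.
Proof. unfold bgood, lam. pose proof (sqrt_pos (32 * INR j * Vj a j)). pose proof (sqrt_pos (Vj a j)). lra. Qed.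
Lemma beta_pos a A J0 j : 0 <= A -> 0 <= beta a A J0 j.
Proof. intros. unfold beta. destruct Nat.ltb. apply crude_pos; auto. apply bgood_pos. Qed.

Lemma bgood_sq a j : (1 <= j)%nat -> bgood a j ^ 2 <= 72 * INR j * Vj a j.
Proof. intros Hj. unfold bgood, lam. pose proof (Vj_pos a j). assert (1 <= INR j) by (apply (le_INR 1); auto).
 set (x := sqrt (32 * INR j * Vj a j)). set (y := sqrt (Vj a j)).
 assert (x ^ 2 = 32 * INR j * Vj a j) by (unfold x; apply pow2_sqrt; nra).
 assert (y ^ 2 = Vj a j) by (unfold y; apply pow2_sqrt; lra).
 assert ((x + 2 * y) ^ 2 <= 2 * x ^ 2 + 8 * y ^ 2) by (pose proof (pow2_ge_0 (x - 2 * y)); simpl in *; nra).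
 nra. Qed.

Lemma cube_le_8pow j : INR j ^ 3 <= 8 ^ j.
Proof. induction j. simpl; lra. destruct j. simpl; lra.
 assert (INR (S (S j)) ^ 3 <= 8 * INR (S j) ^ 3).
 { rewrite (S_INR (S j)). assert (1 <= INR (S j)) by (rewrite S_INR; pose proof (pos_INR j); lra). set (x := INR (S j)) in *. assert (0 <= (x - 1) * (7 * x * x + 4 * x + 1)) by (apply Rmult_le_pos; nra). simpl; nra. }
 apply Rle_trans with (8 * INR (S j) ^ 3). exact H. replace (8 ^ S (S j)) with (8 * 8 ^ S j) by (simpl; ring). apply Rmult_le_compat_l; lra. Qed.

Lemma beta_sum a A l J0 : Un_cv (fun N => sum_f_R0 (fun k => Cnorm (a (S k)) ^ 2 * (ln (INR (S k))) ^ 3) N) l ->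
  (1 <= J0)%nat -> forall J,
  rsum (fun j => beta a A J0 j ^ 2 * (/ 4) ^ j * (INR j + 1) ^ 2) J <=
  rsum (fun j => crude A j ^ 2 * (/ 4) ^ j * (INR j + 1) ^ 2) J0 + 288 * (32 * l + 2).
Proof. intros Hl HJ0 J.
 apply Rle_trans with (rsum (fun j => (if Nat.ltb j J0 then crude A j ^ 2 * (/ 4) ^ j * (INR j + 1) ^ 2 else 0) +
    288 * (INR j ^ 3 * (/ 4) ^ j * sig2 a j + (/ 2) ^ j)) J).
 - apply rsum_le. intros j _. unfold beta.
   assert (Hs : 0 <= INR j ^ 3 * (/ 4) ^ j * sig2 a j + (/ 2) ^ j).
   { unfold sig2. apply Rplus_le_le_0_compat. apply Rmult_le_pos. apply Rmult_le_pos; apply pow_le; [apply pos_INR|lra].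
     apply rsum_nonneg; intros; apply pow2_ge_0. apply pow_le; lra. }
   destruct (Nat.ltb_spec j J0). lra.
   rewrite Rplus_0_l. pose proof (bgood_sq a j ltac:(lia)). assert (Hj1 : 1 <= INR j) by (apply (le_INR 1); lia).
   assert (Hq : (INR j + 1) ^ 2 <= 4 * INR j ^ 2) by (simpl; nra).
   pose proof (pow_le (/4) j ltac:(lra)). pose proof (pow2_ge_0 (bgood a j)). pose proof (Vj_pos a j).
   apply Rle_trans with (72 * INR j * Vj a j * (/ 4) ^ j * (4 * INR j ^ 2)).
   { apply Rmult_le_compat; try apply pow2_ge_0; try (apply Rmult_le_pos; auto); auto. apply Rmult_le_compat_r; auto. }
   unfold Vj. replace (72 * INR j * (sig2 a j + (/ 4) ^ j) * (/ 4) ^ j * (4 * INR j ^ 2)) with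
     (288 * (INR j ^ 3 * (/ 4) ^ j * sig2 a j + INR j ^ 3 * ((/ 4) ^ j * (/ 4) ^ j))) by ring.
   apply Rmult_le_compat_l. lra. apply Rplus_le_compat_l.
   replace ((/ 4) ^ j * (/ 4) ^ j) with ((/ 8) ^ j * (/ 2) ^ j) by (rewrite <- !Rpow_mult_distr; f_equal; field).
   pose proof (cube_le_8pow j). pose proof (pow_le (/2) j ltac:(lra)).
   rewrite <- Rmult_assoc. rewrite <- (Rmult_1_l ((/ 2) ^ j)) at 2. apply Rmult_le_compat_r; auto.
   rewrite pow_inv. apply Rmult_le_reg_r with (8 ^ j). apply pow_lt; lra. rewrite Rmult_assoc, Rinv_l, Rmult_1_r, Rmult_1_l by (apply pow_nonzero; lra). auto.
 - rewrite rsum_plus. pose proof (rsum_lt_part (fun j => crude A j ^ 2 * (/ 4) ^ j * (INR j + 1) ^ 2) J0 J).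
   cbv beta in H. rewrite rsum_scal, rsum_plus. pose proof (key_sum a l Hl J). rewrite rsum_geom_half.
   pose proof (pow_lt (/2) J ltac:(lra)).
   assert (rsum (fun k => if Nat.ltb k J0 then crude A k ^ 2 * (/ 4) ^ k * (INR k + 1) ^ 2 else 0) J <=
     rsum (fun j => crude A j ^ 2 * (/ 4) ^ j * (INR j + 1) ^ 2) J0).
   { apply H. intros k. apply Rmult_le_pos. apply Rmult_le_pos. apply pow2_ge_0. apply pow_le; lra. apply pow2_ge_0. }
   lra.
Qed.

Lemma rsum_cv (f : nat -> nat -> R) (g : nat -> R) K :
  (forall k, is_lim_seq (fun J => f k J) (g k)) -> is_lim_seq (fun J => rsum (fun k => f k J) K) (rsum g K).
Proof. intros H. induction K. simpl. apply is_lim_seq_const. simpl. apply is_lim_seq_plus'; auto. Qed.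

Lemma DL a l A t J0 :
  Un_cv (fun N => sum_f_R0 (fun k => Cnorm (a (S k)) ^ 2 * (ln (INR (S k))) ^ 3) N) l ->
  Abound a A -> (1 <= J0)%nat ->
  (forall j, (J0 <= j)%nat -> forall z, Cnorm z <= 1 -> Cnorm (Qj a t j z) <= bgood a j) ->
  finite_weighted_integral a t.
Proof. intros Hl HA HJ0 Hgood. assert (HA0 := Abound_pos a A HA).
 set (bt := beta a A J0).
 assert (Hbt : forall j z, Cnorm z <= 1 -> Cnorm (Qj a t j z) <= bt j).
 { intros j z Hz. unfold bt, beta. destruct (Nat.ltb_spec j J0). apply Qj_crude; auto. apply Hgood; auto. }
 assert (Hbt0 : forall j, 0 <= bt j) by (intros; apply beta_pos; auto).
 set (Bb := rsum (fun j => crude A j ^ 2 * (/ 4) ^ j * (INR j + 1) ^ 2) J0 + 288 * (32 * l + 2)).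
 assert (HBb : forall J, rsum (fun j => bt j ^ 2 * (/ 4) ^ j * (INR j + 1) ^ 2) J <= Bb) by (apply beta_sum; auto).
 set (P := fun k J => rsum (fun j => bt j * mkj k j) J).
 assert (HP0 : forall k J, 0 <= P k J) by (intros; apply rsum_nonneg; intros; apply Rmult_le_pos; auto; apply mkj_pos).
 assert (Hwk : forall k, 0 < wk k) by (intros; unfold wk; apply Rmult_lt_0_compat; [apply pow_lt; lra|pose proof (pos_INR k); nra]).
 assert (ClA : forall K J, rsum (fun k => wk k * P k J ^ 2) K <= 5000 * Bb).
 { intros K J.
   apply Rle_trans with (rsum (fun k => rsum (fun j => bt j ^ 2 * (/ 2) ^ j * (wk k * (129 * 2 ^ k) * mkj k j)) J) K).
   - apply rsum_le. intros k _.
     pose proof (CS_weighted bt (fun j => mkj k j) (fun j => (/ 2) ^ j) J (fun j => pow_lt (/2) j ltac:(lra)) (fun j => mkj_pos k j)).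
     cbv beta in H. fold (P k J) in H. pose proof (W_bound k J).
     assert (HS : 0 <= rsum (fun j => bt j ^ 2 * (/ 2) ^ j * mkj k j) J) by (apply rsum_nonneg; intros; apply Rmult_le_pos; [apply Rmult_le_pos; [apply pow2_ge_0|apply pow_le; lra]|apply mkj_pos]).
     rewrite (rsum_ext _ (fun j => (wk k * (129 * 2 ^ k)) * (bt j ^ 2 * (/ 2) ^ j * mkj k j))) by (intros; ring).
     rewrite rsum_scal. pose proof (Hwk k). pose proof (pow2_pos k).
     apply Rle_trans with (wk k * (rsum (fun j => bt j ^ 2 * (/ 2) ^ j * mkj k j) J * (129 * 2 ^ k))).
     + apply Rmult_le_compat_l. lra. eapply Rle_trans; [apply H|]. apply Rmult_le_compat_l; auto.
     + right; ring.
   - rewrite rsum_swap. apply Rle_trans with (rsum (fun j => 5000 * (bt j ^ 2 * (/ 4) ^ j * (INR j + 1) ^ 2)) J).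
     + apply rsum_le. intros j _. rewrite rsum_scal. pose proof (D_bound j K).
       assert (0 <= bt j ^ 2 * (/ 2) ^ j) by (apply Rmult_le_pos; [apply pow2_ge_0|apply pow_le; lra]).
       apply Rle_trans with (bt j ^ 2 * (/ 2) ^ j * (5000 * ((INR j + 1) ^ 2 * (/ 2) ^ j))). apply Rmult_le_compat_l; auto.
       right. replace (/4) with (/2 * /2) by field. rewrite Rpow_mult_distr. ring.
     + rewrite rsum_scal. apply Rmult_le_compat_l; [lra|auto]. }
 assert (HX : forall k, {x | Un_cv (P k) x}).
 { intros k. apply growing_cv. intros J. unfold P. simpl. pose proof (Hbt0 J). pose proof (mkj_pos k J). nra.
   exists (1 + 5000 * Bb / wk k). intros y [J HJ]. subst y.
   pose proof (ClA (S k) J). assert (wk k * P k J ^ 2 <= 5000 * Bb).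
   { eapply Rle_trans; [|apply H]. apply (rsum_last_le (fun k => wk k * P k J ^ 2)). intros; apply Rmult_le_pos; [left; auto|apply pow2_ge_0]. lia. }
   assert (P k J ^ 2 <= 5000 * Bb / wk k). { apply Rmult_le_reg_l with (wk k); auto. replace (wk k * (5000 * Bb / wk k)) with (5000 * Bb) by (field; pose proof (Hwk k); lra). lra. }
   pose proof (HP0 k J). simpl in H1. nra. }
 set (X := fun k => proj1_sig (HX k)).
 assert (HXc : forall k, Un_cv (P k) (X k)) by (intros; unfold X; destruct (HX k); auto).
 assert (HPX : forall k J, P k J <= X k).
 { intros k J. apply (growing_ineq (P k)); auto. intros n. unfold P; simpl. pose proof (Hbt0 n). pose proof (mkj_pos k n). nra. }
 assert (ClC : forall K, rsum (fun k => wk k * X k ^ 2) K <= 5000 * Bb).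
 { intros K. assert (Hc : is_lim_seq (fun J => rsum (fun k => wk k * P k J ^ 2) K) (rsum (fun k => wk k * X k ^ 2) K)).
   { apply (rsum_cv (fun k J => wk k * P k J ^ 2) (fun k => wk k * X k ^ 2)). intros k.
     apply is_lim_seq_mult'. apply is_lim_seq_const. simpl. apply is_lim_seq_mult'. apply is_lim_seq_Reals; auto.
     apply is_lim_seq_mult'. apply is_lim_seq_Reals; auto. apply is_lim_seq_const. }
   pose proof (is_lim_seq_le _ _ _ _ (fun J => ClA K J) Hc (is_lim_seq_const (5000 * Bb))). simpl in H. auto. }
 assert (ClD : forall k x, 0 <= x <= rho k -> Mfun a t x <= X k).
 { intros k x Hx. pose proof (rho_bounds k). unfold Mfun. rewrite Rabs_pos_eq by lra.
   apply (M_le a t A x); auto. lra. intros z w Hz Hw.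
   apply (Csum_subseq_le (fderiv_term a t z) w (X k) (fun J => 2 ^ S J - 2)%nat).
   - intros n. pose proof (pow2_ge1 n). simpl. lia.
   - auto.
   - intros J. replace (S (2 ^ S J - 2)) with (2 ^ S J - 1)%nat by (pose proof (pow2_ge1 J); simpl; lia).
     eapply Rle_trans. apply (partial_bound a t bt (rho k)); auto. lra. lra. apply HPX. }
 exists (Mfun a t). split.
 { intros r Hr. unfold Mfun. rewrite Rabs_pos_eq by lra. apply (M_lub a t A); auto. }
 exists (5000 * Bb). intros s Hs. exists (integrand_int a t A s HA Hs).
 destruct (pp_reach s Hs) as [K HK].
 set (c := fun k => (/ 2) ^ k * (INR k + 1) ^ 2 * X k ^ 2).
 apply Rle_trans with (rsum (fun k => c k * (/ 2) ^ S k) K). apply (int_pieces _ c).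
 - intros x Hx. apply Rmult_le_pos; [apply Rmult_le_pos|apply pow2_ge_0]. lra. apply pow2_ge_0.
 - intros k x Hx. unfold c.
   assert (Hp1 : pp k = 1 - (/ 2) ^ k) by auto. assert (Hp2 : pp (S k) = 1 - (/ 2) ^ S k) by auto.
   assert (Hh : 0 < (/ 2) ^ S k) by (apply pow_lt; lra). assert (Hh2 : (/ 2) ^ S k <= (/ 2) ^ k) by (simpl; pose proof (pow_le (/2) k ltac:(lra)); lra).
   assert (Hx1 : 0 <= x < 1). { split. pose proof (pow_le (/2) k ltac:(lra)). assert ((/2)^k <= 1) by (rewrite <- (pow1 k); apply pow_incr; lra). lra. lra. }
   assert (HL0 : 0 <= ln (1 / (1 - x))). { apply ln_nonneg. apply Rmult_le_reg_r with (1 - x). lra. field_simplify; lra. }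
   assert (HL1 : ln (1 / (1 - x)) <= INR k + 1).
   { apply Rle_trans with (ln (2 ^ S k)). apply ln_le'. apply Rdiv_lt_0_compat; lra.
     apply Rmult_le_reg_r with (1 - x). lra. replace (1 / (1 - x) * (1 - x)) with 1 by (field; lra).
     rewrite pow_inv in Hp2. assert (1 - x >= / 2 ^ S k) by lra. apply Rmult_le_reg_l with (/ 2 ^ S k). apply Rinv_0_lt_compat, pow2_pos.
     rewrite <- Rmult_assoc, Rinv_l, Rmult_1_l, Rmult_1_r by (apply pow_nonzero; lra). lra.
     rewrite ln_pow by lra. rewrite S_INR. pose proof ln2_le1. pose proof (pos_INR k). nra. }
   assert (HM0 : 0 <= Mfun a t x) by (unfold Mfun; rewrite Rabs_pos_eq by lra; apply (M_ge0 a t A); auto).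
   assert (HM1 : Mfun a t x <= X k) by (apply ClD; unfold rho; lra).
   assert (H1 : ln (1 / (1 - x)) ^ 2 <= (INR k + 1) ^ 2) by (apply pow_incr; lra).
   assert (H2 : Mfun a t x ^ 2 <= X k ^ 2) by (apply pow_incr; lra).
   assert (H3 : 1 - x <= (/ 2) ^ k) by lra.
   apply Rmult_le_compat; try apply pow2_ge_0; auto. apply Rmult_le_pos; [lra|apply pow2_ge_0].
   apply Rmult_le_compat; auto; try lra; apply pow2_ge_0.
 - split; [lra|auto].
 - apply Rle_trans with (rsum (fun k => wk k * X k ^ 2) K); [|apply (ClC K)]. right. apply rsum_ext. intros k _. unfold c, wk.
   replace (2 * k + 1)%nat with (k + S k)%nat by lia. rewrite pow_add. ring.
Qed.

Definition stg (n : nat) : nat := Nat.log2 (S n).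
Definition idx (n : nat) : nat := (S n - 2 ^ stg n)%nat.
Definition jof (s : nat) : nat := (Nat.log2 s - 1)%nat.
Definition selb a (J n : nat) : bool :=
  Nat.eqb (2 ^ S (jof (stg n))) (stg n) && Nat.leb J (jof (stg n)) &&
  (if Rle_dec (lam a (jof (stg n))) (gmax a (jof (stg n)) (idx n)) then true else false).
Definition lo a J n : R := if selb a J n then INR (idx n) / 2 ^ stg n else 0.
Definition hi a J n : R := if selb a J n then (INR (idx n) + 1) / 2 ^ stg n else 0.

Lemma stg_blk s i : (i < 2 ^ s)%nat -> stg (2 ^ s - 1 + i) = s /\ idx (2 ^ s - 1 + i) = i.
Proof. intros Hi. pose proof (pow2_ge1 s). assert (E : S (2 ^ s - 1 + i) = (2 ^ s + i)%nat) by lia.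
 assert (Hs : stg (2 ^ s - 1 + i) = s). { unfold stg. rewrite E. apply Nat.log2_unique. lia. simpl. lia. }
 split; auto. unfold idx. rewrite Hs, E. lia. Qed.

Lemma jof_pow j : jof (2 ^ S j) = j.
Proof. unfold jof. rewrite Nat.log2_pow2 by lia. lia. Qed.

Lemma len_eq a J n : hi a J n - lo a J n = if selb a J n then / 2 ^ stg n else 0.
Proof. unfold hi, lo. destruct selb. field. apply pow_nonzero; lra. ring. Qed.

Definition tele (s0 : nat) (i : nat) : R := 1 / (INR (s0 + i) - 1) - 1 / INR (s0 + i).
Lemma tele_sum s0 n : (2 <= s0)%nat -> rsum (tele s0) n = 1 / (INR s0 - 1) - 1 / (INR (s0 + n) - 1).
Proof. intros Hs. assert (H2 : 2 <= INR s0) by (apply (le_INR 2); auto). induction n.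
 simpl. rewrite Nat.add_0_r. ring. cbn [rsum]. rewrite IHn. unfold tele.
 replace (s0 + S n)%nat with (S (s0 + n)) by lia. rewrite S_INR. pose proof (pos_INR (s0 + n)).
 assert (INR s0 <= INR (s0 + n)) by (apply le_INR; lia). field. lra. Qed.
Lemma tele_pos s0 i : (2 <= s0)%nat -> 0 <= tele s0 i.
Proof. intros Hs. unfold tele. assert (2 <= INR (s0 + i)) by (apply (le_INR 2); lia).
 assert (1 / INR (s0 + i) <= 1 / (INR (s0 + i) - 1)). { apply Rmult_le_compat_l. lra. apply Rinv_le_contravar; lra. } lra. Qed.

Lemma stage_bound a J s : (1 <= J)%nat ->
  rsum (fun i => hi a J (2 ^ s - 1 + i) - lo a J (2 ^ s - 1 + i)) (2 ^ s) <=
  144 * (if Nat.ltb s (2 ^ S J) then 0 else tele (2 ^ S J) (s - 2 ^ S J)).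
Proof. intros HJ. assert (Hs0 : (2 <= 2 ^ S J)%nat) by (simpl; pose proof (pow2_ge1 J); lia).
 rewrite (rsum_ext _ (fun i => if (Nat.eqb (2 ^ S (jof s)) s && Nat.leb J (jof s) &&
       (if Rle_dec (lam a (jof s)) (gmax a (jof s) i) then true else false))%bool then / 2 ^ s else 0)).
 2:{ intros i Hi. rewrite len_eq. destruct (stg_blk s i Hi) as [E1 E2]. unfold selb. rewrite E1, E2. auto. }
 destruct (Nat.eqb_spec (2 ^ S (jof s)) s) as [Es|Es]; destruct (Nat.leb_spec J (jof s)) as [Ej|Ej]; simpl andb.
 2,3,4: rewrite (rsum_ext _ (fun _ => 0 * 0)) by (intros; ring); rewrite rsum_scal;
   destruct (Nat.ltb_spec s (2 ^ S J)); [lra|pose proof (tele_pos (2 ^ S J) (s - 2 ^ S J) Hs0); lra].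
 set (j := jof s) in *. rewrite <- Es.
 assert (Hsj : (2 ^ S j = 2 ^ j + 2 ^ j)%nat) by (simpl; lia).
 rewrite (rsum_ext _ (fun i => (if Rle_dec (lam a j) (gmax a j i) then 1 else 0) * / 2 ^ (2 ^ S j))).
 2:{ intros i _. destruct Rle_dec; ring. }
 rewrite rsum_mult_r. rewrite Hsj. pose proof (bad_count a j ltac:(lia)).
 assert (Hp := pow2_pos (2 ^ j + 2 ^ j)).
 apply Rle_trans with (36 * (/ 4) ^ j).
 { apply Rmult_le_reg_r with (2 ^ (2 ^ j + 2 ^ j)); auto. rewrite Rmult_assoc, Rinv_l, Rmult_1_r by lra. lra. }
 assert (Hle : (2 ^ S J <= 2 ^ S j)%nat) by (apply Nat.pow_le_mono_r; lia).
 rewrite <- Hsj. destruct (Nat.ltb_spec (2 ^ S j) (2 ^ S J)). lia.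
 unfold tele. replace (2 ^ S J + (2 ^ S j - 2 ^ S J))%nat with (2 ^ S j)%nat by lia.
 rewrite INR_pow2. assert (Hq : 2 ^ j >= 1) by (apply Rle_ge, pow_R1_Rle; lra).
 replace ((/ 4) ^ j) with (/ (2 ^ j * 2 ^ j)) by (rewrite pow_inv; f_equal; rewrite <- Rpow_mult_distr; f_equal; lra).
 simpl pow. replace (1 / (2 * 2 ^ j - 1) - 1 / (2 * 2 ^ j)) with (/ ((2 * 2 ^ j - 1) * (2 * 2 ^ j))) by (field; lra).
 rewrite <- Rmult_assoc. apply Rmult_le_reg_r with ((2 * 2 ^ j - 1) * (2 * 2 ^ j) * (2 ^ j * 2 ^ j)). nra.
 field_simplify; try lra; nra. Qed.

Lemma len_nonneg a J n : 0 <= hi a J n - lo a J n.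
Proof. rewrite len_eq. destruct selb. left; apply Rinv_0_lt_compat, pow2_pos. lra. Qed.

Lemma total_len a J : (1 <= J)%nat -> forall N,
  sum_f_R0 (fun n => hi a J n - lo a J n) N <= 144 * (1 / (INR (2 ^ S J) - 1)).
Proof. intros HJ N. assert (Hs0 : (2 <= 2 ^ S J)%nat) by (simpl; pose proof (pow2_ge1 J); lia).
 assert (H2 : 2 <= INR (2 ^ S J)) by (apply (le_INR 2); auto).
 rewrite sum_f_R0_rsum. eapply Rle_trans. apply (rsum_mono _ (S N) (2 ^ S N - 1)). intros; apply len_nonneg.
 pose proof (Nat.pow_gt_lin_r 2 (S N) ltac:(lia)). lia.
 rewrite rsum_blocks. eapply Rle_trans. apply rsum_le. intros s _. apply stage_bound; auto.
 rewrite rsum_scal. apply Rmult_le_compat_l. lra.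
 apply rsum_ge_part. intros; apply tele_pos; auto.
 intros n. rewrite tele_sum by auto. assert (0 <= 1 / (INR (2 ^ S J + n) - 1)).
 { assert (INR (2 ^ S J) <= INR (2 ^ S J + n)) by (apply le_INR; lia). apply Rmult_le_pos. lra. left; apply Rinv_0_lt_compat; lra. }
 lra. Qed.

Lemma Qj_dyadic a t p k j z : t = INR k / 2 ^ p -> (S p <= j)%nat -> Cnorm (Qj a t j z) = 0.
Proof. intros Ht Hj. apply Rle_antisym; [|apply Cnorm_ge0]. unfold Qj. eapply Rle_trans. apply Cnorm_csum.
 rewrite (rsum_ext _ (fun _ => 0 * 0)). rewrite rsum_scal; lra. intros i Hi. unfold coef.
 rewrite (rad_dyadic t p k (2 ^ j + i) Ht). rewrite Rmult_0_r, Cnorm_mul, Cnorm_scale, Rabs_R0. ring.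
 pose proof (Nat.pow_gt_lin_r 2 j ltac:(lia)). lia. Qed.

Theorem mainTheorem12 (a : nat -> Cx) :
  (exists l : R,
     Un_cv (fun N => sum_f_R0
              (fun k => Cnorm (a (S k)) ^ 2 * (ln (INR (S k))) ^ 3) N) l) ->
  null_set (fun t => 0 <= t <= 1 /\ ~ finite_weighted_integral a t).
Proof. intros [l Hl] eps Heps.
 destruct (A_exists a l Hl) as [A HA].
 destruct (pow_lt_1_zero (/2) ltac:(rewrite Rabs_pos_eq; lra) (eps / 300) ltac:(lra)) as [N HN].
 set (J := S N).
 exists (lo a J), (hi a J). split; [|split].
 - intros n. pose proof (len_nonneg a J n). lra.
 - intros t [Ht Hnf].
   assert (Hnd : ~ dyadic t).
   { intros [p [k Hk]]. apply Hnf. apply (DL a l A t (S p)); auto. lia. intros j Hj z Hz.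
     rewrite (Qj_dyadic a t p k j z Hk Hj). apply bgood_pos. }
   assert (Hbad : exists j, (J <= j)%nat /\ exists z, Cnorm z <= 1 /\ bgood a j < Cnorm (Qj a t j z)).
   { destruct (classic (exists j, (J <= j)%nat /\ exists z, Cnorm z <= 1 /\ bgood a j < Cnorm (Qj a t j z))) as [H|H]; auto.
     exfalso. apply Hnf. apply (DL a l A t J); auto. unfold J; lia. intros j Hj z Hz.
     destruct (Rle_dec (Cnorm (Qj a t j z)) (bgood a j)) as [|Hn]; auto. exfalso; apply H.
     exists j; split; auto; exists z; split; auto; lra. }
   destruct Hbad as [j [Hj [z [Hz Hzb]]]].
   destruct (nondyadic_interval t (2 ^ S j) Ht Hnd) as [k [Hk Htk]].
   destruct (Rlt_le_dec (gmax a j k) (lam a j)) as [Hg|Hg].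
   { exfalso. pose proof (good_bound a t j k ltac:(unfold J in Hj; lia) Htk Hg z Hz). lra. }
   exists (2 ^ (2 ^ S j) - 1 + k)%nat. destruct (stg_blk (2 ^ S j) k Hk) as [E1 E2].
   assert (Hsel : selb a J (2 ^ (2 ^ S j) - 1 + k) = true).
   { unfold selb. rewrite E1, E2, jof_pow, Nat.eqb_refl. destruct (Nat.leb_spec J j); [|lia]. destruct (Rle_dec (lam a j) (gmax a j k)); [reflexivity|lra]. }
   unfold lo, hi. rewrite Hsel, E1, E2. auto.
 - intros M. eapply Rle_trans. apply total_len. unfold J; lia.
   specialize (HN J ltac:(unfold J; lia)). rewrite Rabs_pos_eq in HN by (apply pow_le; lra).
   rewrite INR_pow2. assert (Hq : 1 <= 2 ^ J) by (apply pow_R1_Rle; lra).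
   replace (2 ^ S J) with (2 * 2 ^ J) by (simpl; ring). rewrite pow_inv in HN.
   assert (1 / (2 * 2 ^ J - 1) <= / 2 ^ J).
   { unfold Rdiv. rewrite Rmult_1_l. apply Rinv_le_contravar; lra. }
   lra.
Qed.
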